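(* For every $q\ge2$, $$P_q(\theta,\Omega_\varepsilon)=P_q(\theta,\Omega_0)+2\varepsilon q\sin\frac{\pi}{q}\,n^{(q)}(\theta)+O(\varepsilon^2),$$ where $P_q(\theta,\Omega_0)=2q\sin\frac{\pi}{q}$.
   Context: $\Omega_0$ is the unit disk; for small $\varepsilon>0$, $\Omega_\varepsilon$ is the strictly convex domain whose boundary in polar coordinates is $r=1+\varepsilon n(\theta)+\varepsilon^2 m(\theta)+O(\varepsilon^3)$, with $n,m$ real analytic $2\pi$-periodic functions, $n(\theta)=\sum_k n_k e^{ik\theta}$, $m(\theta)=\sum_k m_ke^{ik\theta}$. For a $2\pi$-periodic function $f=\sum_k f_ke^{ik\theta}$ and $q\in\mathbb{N}$, $f^{(q)}(\theta):=\sum_{j\in\mathbb{Z}}f_{jq}e^{ijq\theta}$. For $q\ge2$, $P_q(\theta,\Omega)$ is the maximal perimeter of a $q$-gon inscribed in $\Omega$ (vertices on $\partial\Omega$, in counterclockwise order, going once around) whose initial and final vertex is the boundary point with polar angle $\theta$. *)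

(* Defs.v *)
From Stdlib Require Import Reals Lra ClassicalEpsilon.
Open Scope R_scope.

Definition periodic2pi (f : R -> R) : Prop :=
  forall t, f (t + 2 * PI) = f t.

Definition real_analytic (f : R -> R) : Prop :=
  forall x0, exists (r : R) (a : nat -> R),
    0 < r /\ forall x, Rabs (x - x0) < r -> Pser a (x - x0) (f x).

(* The Riemann integral of f on [a,b] (well defined, independently of the
   integrability proof, whenever f is Riemann integrable). *)
Definition RInt (f : R -> R) (a b : R) : R :=
  epsilon (inhabits 0)
    (fun v => exists pr : Riemann_integrable f a b, RiemannInt pr = v).

(* Partial sums  sum_{|j| <= N} f_{jq} e^{ijq theta}  of f^{(q)}(theta),
   written in real form: f_0 = (1/2pi) int_0^{2pi} f, and for k >= 1,
   f_k e^{ik theta} + f_{-k} e^{-ik theta}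
     = (1/pi) int_0^{2pi} f(t) cos(k (theta - t)) dt. *)
Fixpoint rsum (g : nat -> R) (N : nat) : R :=
  match N with
  | O => 0
  | S k => rsum g k + g k
  end.

Definition fourier_pair (f : R -> R) (k : nat) (theta : R) : R :=
  / PI * RInt (fun t => f t * cos (INR k * (theta - t))) 0 (2 * PI).

Definition fourier_q_partial (f : R -> R) (q : nat) (theta : R) (N : nat) : R :=
  / (2 * PI) * RInt f 0 (2 * PI)
  + rsum (fun j => fourier_pair f ((S j) * q)%nat theta) N.

Definition in_closed_region (rho : R -> R) (x y : R) : Prop :=
  exists r phi, 0 <= r <= rho phi /\ x = r * cos phi /\ y = r * sin phi.

Definition in_open_region (rho : R -> R) (x y : R) : Prop :=
  exists r phi, 0 <= r < rho phi /\ x = r * cos phi /\ y = r * sin phi.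

Definition strictly_convex (rho : R -> R) : Prop :=
  forall x1 y1 x2 y2 t,
    in_closed_region rho x1 y1 -> in_closed_region rho x2 y2 ->
    (x1 <> x2 \/ y1 <> y2) -> 0 < t < 1 ->
    in_open_region rho ((1 - t) * x1 + t * x2) ((1 - t) * y1 + t * y2).

Definition dist2 (x1 y1 x2 y2 : R) : R :=
  sqrt ((x1 - x2) ^ 2 + (y1 - y2) ^ 2).

Definition bx (rho : R -> R) (phi : R) : R := rho phi * cos phi.
Definition by_ (rho : R -> R) (phi : R) : R := rho phi * sin phi.

(* perimeter of the q-gon with vertices at polar angles phi 0, ..., phi q
   (phi q closes the polygon) *)
Definition perimeter (rho : R -> R) (q : nat) (phi : nat -> R) : R :=
  rsum (fun i => dist2 (bx rho (phi i)) (by_ rho (phi i))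
                       (bx rho (phi (S i))) (by_ rho (phi (S i)))) q.

(* admissible angle sequences: start at theta, counterclockwise, once around,
   end at theta + 2pi (i.e. back at the starting boundary point) *)
Definition admissible (q : nat) (theta : R) (phi : nat -> R) : Prop :=
  phi 0%nat = theta /\ phi q = theta + 2 * PI /\
  forall i, (i < q)%nat -> phi i <= phi (S i).

Definition perimeters (rho : R -> R) (q : nat) (theta : R) : R -> Prop :=
  fun p => exists phi, admissible q theta phi /\ p = perimeter rho q phi.

Definition Pq (rho : R -> R) (q : nat) (theta : R) : R :=
  epsilon (inhabits 0) (fun l => is_lub (perimeters rho q theta) l).

Definition unit_disk_rho : R -> R := fun _ => 1.

(* Main.v *)
Require Import Defs.
From Stdlib Require Import Reals.
Open Scope R_scope.
From Stdlib Require Import Lra Lia ZArith ClassicalEpsilon.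
From Coquelicot Require Import Coquelicot.
Open Scope R_scope.

Lemma sin_lin (y : R) : 0 <= y <= PI / 2 -> y / 4 <= sin y.
Proof.
  intros [H1 H2].
  assert (HP := PI_4). assert (HP2 := PI_RGT_0).
  destruct (SIN y H1 ltac:(lra)) as [Hs _].
  assert (E : sin_lb y = y - y^3/6 + y^5/120 - y^7/5040).
  { unfold sin_lb, sin_approx, sin_term. simpl sum_f_R0.
    replace (2*0+1)%nat with 1%nat by lia.
    replace (2*1+1)%nat with 3%nat by lia.
    replace (2*2+1)%nat with 5%nat by lia.
    replace (2*3+1)%nat with 7%nat by lia.
    replace (INR (Factorial.fact 1)) with 1 by (simpl; lra).
    replace (INR (Factorial.fact 3)) with 6 by (simpl; lra).
    replace (INR (Factorial.fact 5)) with 120 by (simpl; lra).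
    replace (INR (Factorial.fact 7)) with 5040 by (vm_compute; lra).
    field. }
  rewrite E in Hs.
  assert (y <= 2) by lra.
  assert (0 <= y * y) by nra.
  assert (y*y <= 4) by nra.
  assert (y^3 = y * (y*y)) by ring.
  assert (y^5 = y * (y*y)*(y*y)) by ring.
  assert (y^7 = y * (y*y)*(y*y)*(y*y)) by ring.
  assert (0 <= y * (y*y)*(y*y)) by (apply Rmult_le_pos; [apply Rmult_le_pos|]; lra).
  assert ((y*y)*(y*y) <= 16) by nra.
  assert ((y*y)*(y*y)*(y*y) <= 64) by nra.
  assert (y * (y*y)*(y*y)*(y*y) <= 64 * y).
  { replace (y * (y*y)*(y*y)*(y*y)) with (y * ((y*y)*(y*y)*(y*y))) by ring.
    rewrite (Rmult_comm 64). apply Rmult_le_compat_l; lra. }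
  nra.
Qed.

Lemma sin_ge_half_a (a x : R) : 0 < a <= PI / 2 -> 0 <= x <= PI ->
  sin (a / 2) <= sin ((x + a) / 2).
Proof.
  intros Ha Hx.
  assert (HP2 := PI_RGT_0).
  assert (E := form4 ((x + a) / 2) (a / 2)).
  assert (0 <= cos ((((x + a) / 2) + (a / 2)) / 2)).
  { apply cos_ge_0; lra. }
  assert (0 <= sin ((((x + a) / 2) - (a / 2)) / 2)).
  { apply sin_ge_0; lra. }
  nra.
Qed.

Lemma sin_concave_strong (a x : R) : 0 < a <= PI / 2 -> 0 <= x <= PI ->
  sin x <= sin a + cos a * (x - a) - (sin (a / 2) / 8) * (x - a) ^ 2.
Proof.
  intros Ha Hx.
  assert (HP2 := PI_RGT_0).
  set (k := sin (a / 2) / 8).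
  set (g := fun y => sin a + cos a * (y - a) - k * (y - a) ^ 2 - sin y).
  set (dg := fun y => cos a - 2 * k * (y - a) - cos y).
  destruct (MVT_gen g a x dg) as [c [Hc Hgc]].
  - intros y _. unfold g, dg. auto_derive; auto. ring.
  - intros y _. apply derivable_continuous_pt.
    unfold g. reg.
  - assert (g a = 0) by (unfold g; ring).
    assert (0 <= g x).
    { rewrite H in Hgc. rewrite Rminus_0_r in Hgc. rewrite Hgc.
      unfold dg.
      assert (E := form2 a c).
      destruct (Rle_dec a x) as [Hax|Hax].
      - rewrite Rmin_left in Hc by lra. rewrite Rmax_right in Hc by lra.
        assert (S1 : (a - c) / 2 = - ((c - a) / 2)) by field.
        rewrite S1, sin_neg in E.
        assert ((c - a)/2 / 4 <= sin ((c - a) / 2)) by (apply sin_lin; lra).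
        assert (sin (a / 2) <= sin ((a + c) / 2)).
        { replace ((a + c) / 2) with ((c + a) / 2) by field. apply sin_ge_half_a; lra. }
        assert (0 <= sin (a / 2)) by (apply sin_ge_0; lra).
        assert (0 <= (c - a) / 2 / 4) by lra.
        assert (2 * sin ((c - a) / 2) * sin ((a + c) / 2) >= 2 * k * (c - a)).
        { unfold k. assert (sin ((c - a) / 2) * sin ((a + c) / 2) >= (c - a) / 2 / 4 * sin (a/2)).
          { apply Rle_ge. apply Rmult_le_compat; lra. } lra. }
        apply Rmult_le_pos; lra.
      - rewrite Rmin_right in Hc by lra. rewrite Rmax_left in Hc by lra.
        assert ((a - c)/2 / 4 <= sin ((a - c) / 2)) by (apply sin_lin; lra).
        assert (sin (a / 2) <= sin ((a + c) / 2)).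
        { replace ((a + c) / 2) with ((c + a) / 2) by field. apply sin_ge_half_a; lra. }
        assert (0 <= sin (a / 2)) by (apply sin_ge_0; lra).
        assert (0 <= (a - c) / 2 / 4) by lra.
        assert (2 * sin ((a - c) / 2) * sin ((a + c) / 2) >= 2 * k * (a - c)).
        { unfold k. assert (sin ((a - c) / 2) * sin ((a + c) / 2) >= (a - c) / 2 / 4 * sin (a/2)).
          { apply Rle_ge. apply Rmult_le_compat; lra. } lra. }
        replace ((cos a - 2 * k * (c - a) - cos c) * (x - a)) with
          ((- (cos a - 2 * k * (c - a) - cos c)) * (a - x)) by ring.
        apply Rmult_le_pos; lra. }
    unfold g in H0. lra.
Qed.

Lemma sin_lip (x y : R) : Rabs (sin x - sin y) <= Rabs (x - y).
Proof.
  destruct (MVT_gen sin y x cos) as [c [_ Hc]].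
  - intros z _. apply is_derive_sin.
  - intros z _. apply derivable_continuous_pt. reg.
  - rewrite Hc, Rabs_mult.
    assert (Rabs (cos c) <= 1) by (apply Rabs_le; split; apply COS_bound).
    assert (0 <= Rabs (x - y)) by apply Rabs_pos.
    nra.
Qed.

Lemma sqrt_le_r (y x : R) : 0 <= x -> y <= x ^ 2 -> sqrt y <= x.
Proof. intros H1 H2. rewrite <- (sqrt_pow2 x H1). apply sqrt_le_1_alt. exact H2. Qed.

Lemma sqrt_ge_r (y x : R) : 0 <= x -> x ^ 2 <= y -> x <= sqrt y.
Proof. intros H1 H2. rewrite <- (sqrt_pow2 x H1). apply sqrt_le_1_alt. exact H2. Qed.

Lemma chord_formula (rho : R -> R) (a b : R) :
  dist2 (bx rho a) (by_ rho a) (bx rho b) (by_ rho b) =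
  sqrt ((rho a - rho b) ^ 2 + 4 * rho a * rho b * sin ((b - a) / 2) ^ 2).
Proof.
  unfold dist2, bx, by_. f_equal.
  assert (E1 := cos_minus b a).
  assert (E2 := cos_2a_sin ((b - a) / 2)).
  replace (2 * ((b - a) / 2)) with (b - a) in E2 by field.
  assert (E3 := sin2_cos2 a). assert (E4 := sin2_cos2 b). unfold Rsqr in *.
  set (r := rho a) in *. set (s := rho b) in *.
  replace ((r * cos a - s * cos b) ^ 2 + (r * sin a - s * sin b) ^ 2) with
    (r^2 * (sin a * sin a + cos a * cos a) + s^2 * (sin b * sin b + cos b * cos b)
     - 2 * r * s * (cos b * cos a + sin b * sin a)) by ring.
  rewrite E3, E4, <- E1, E2. ring.
Qed.

Lemma chord_lower (r r' s : R) : 0 <= r -> 0 <= r' -> 0 <= s <= 1 ->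
  (r + r') * s <= sqrt ((r - r') ^ 2 + 4 * r * r' * s ^ 2).
Proof.
  intros H1 H2 [H3 H4]. apply sqrt_ge_r.
  - apply Rmult_le_pos; lra.
  - assert (0 <= (r - r')^2) by apply pow2_ge_0.
    assert (s^2 <= 1) by (replace 1 with (1^2) by ring; apply pow_incr; lra).
    assert ((r - r')^2 * s^2 <= (r - r')^2 * 1) by (apply Rmult_le_compat_l; lra).
    replace (((r + r') * s)^2) with ((r - r')^2 * s^2 + 4 * r * r' * s ^ 2) by ring. lra.
Qed.

Lemma chord_upper (A r r' s dl e K : R) :
  0 < e -> 0 <= dl <= 4 -> 1 <= r + r' -> 0 <= r -> 0 <= r' -> 0 <= s ->
  dl / 4 <= s -> 0 <= K -> Rabs A <= K * (e * dl + e ^ 2) ->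
  sqrt (A ^ 2 + 4 * r * r' * s ^ 2) <= (r + r') * s + (2 * K + 32 * K ^ 2) * e ^ 2.
Proof.
  intros He Hdl Hrr Hr Hr' Hs Hsd HK HA.
  set (B := (r + r') * s).
  assert (HB0 : 0 <= B) by (unfold B; apply Rmult_le_pos; lra).
  assert (HBs : s <= B) by (unfold B; nra).
  assert (H4 : 4 * r * r' * s ^ 2 <= B ^ 2).
  { unfold B. assert (0 <= (r - r')^2 * s^2) by (apply Rmult_le_pos; apply pow2_ge_0).
    replace (((r + r') * s)^2) with ((r - r')^2 * s^2 + 4 * r * r' * s ^ 2) by ring. lra. }
  assert (HA2 : A ^ 2 = Rabs A ^ 2) by (rewrite <- Rsqr_pow2, <- Rsqr_pow2; apply Rsqr_abs).
  assert (HAp := Rabs_pos A).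
  apply sqrt_le_r.
  - assert (0 <= (2 * K + 32 * K ^ 2) * e ^ 2).
    { apply Rmult_le_pos; [|apply pow2_ge_0]. assert (0 <= K^2) by apply pow2_ge_0. lra. }
    fold B. lra.
  - destruct (Rle_dec e dl) as [Hed|Hed].
    + assert (HA' : Rabs A <= 2 * K * e * dl).
      { assert (e^2 <= e * dl) by nra. nra. }
      assert (Hdl0 : 0 < dl) by lra.
      assert (A ^ 2 <= 2 * B * (32 * K^2 * e^2)).
      { rewrite HA2. assert (Rabs A ^ 2 <= (2 * K * e * dl)^2).
        { apply pow_incr. lra. }
        assert ((2 * K * e * dl)^2 <= 2 * (dl/4) * (32 * K^2 * e^2)).
        { assert (0 <= K^2 * e^2) by (apply Rmult_le_pos; apply pow2_ge_0).
          replace ((2 * K * e * dl)^2) with (4 * dl * dl * (K^2 * e^2)) by ring.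
          replace (2 * (dl/4) * (32 * K^2 * e^2)) with (16 * dl * (K^2 * e^2)) by field.
          assert (dl * dl <= 4 * dl) by nra. nra. }
        assert (0 <= K^2 * e^2) by (apply Rmult_le_pos; apply pow2_ge_0).
        nra. }
      assert (0 <= K * e^2) by (apply Rmult_le_pos; [lra|apply pow2_ge_0]).
      assert (0 <= K^2 * e^2) by (apply Rmult_le_pos; apply pow2_ge_0).
      set (Q := (2 * K + 32 * K ^ 2) * e ^ 2).
      assert (32 * K^2 * e^2 <= Q) by (unfold Q; lra).
      assert (2 * B * (32 * K^2 * e^2) <= 2 * B * Q) by (apply Rmult_le_compat_l; lra).
      assert (0 <= Q^2) by apply pow2_ge_0.
      replace ((B + Q)^2) with (B^2 + 2 * B * Q + Q^2) by ring. lra.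
    + assert (HA' : Rabs A <= 2 * K * e^2).
      { assert (e * dl <= e^2) by nra. nra. }
      assert (A^2 <= (2 * K * e^2)^2).
      { rewrite HA2. apply pow_incr. lra. }
      assert (0 <= K * e^2) by (apply Rmult_le_pos; [lra|apply pow2_ge_0]).
      assert (0 <= K^2 * e^2) by (apply Rmult_le_pos; apply pow2_ge_0).
      set (Q := (2 * K + 32 * K ^ 2) * e ^ 2).
      assert (2 * K * e^2 <= Q) by (unfold Q; lra).
      assert ((2 * K * e^2)^2 <= Q^2) by (apply pow_incr; lra).
      assert (0 <= 2 * B * Q) by (apply Rmult_le_pos; lra).
      replace ((B + Q)^2) with (B^2 + 2 * B * Q + Q^2) by ring. lra.
Qed.

Lemma rsum_ext (f g : nat -> R) N : (forall i, (i < N)%nat -> f i = g i) -> rsum f N = rsum g N.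
Proof. induction N; intros H; simpl; auto. rewrite IHN by (intros; apply H; lia). rewrite H by lia. auto. Qed.

Lemma rsum_le (f g : nat -> R) N : (forall i, (i < N)%nat -> f i <= g i) -> rsum f N <= rsum g N.
Proof. induction N; intros H; simpl; [lra|]. assert (H1 := H N ltac:(lia)). assert (rsum f N <= rsum g N) by (apply IHN; intros; apply H; lia). lra. Qed.

Lemma rsum_plus (f g : nat -> R) N : rsum (fun i => f i + g i) N = rsum f N + rsum g N.
Proof. induction N; simpl; [lra|]. rewrite IHN. ring. Qed.

Lemma rsum_minus (f g : nat -> R) N : rsum (fun i => f i - g i) N = rsum f N - rsum g N.
Proof. induction N; simpl; [lra|]. rewrite IHN. ring. Qed.

Lemma rsum_scal (c : R) (f : nat -> R) N : rsum (fun i => c * f i) N = c * rsum f N.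
Proof. induction N; simpl; [lra|]. rewrite IHN. ring. Qed.

Lemma rsum_const (c : R) N : rsum (fun _ => c) N = INR N * c.
Proof. induction N; simpl rsum; [simpl; lra|]. rewrite IHN, S_INR. ring. Qed.

Lemma rsum_shift (f : nat -> R) N : rsum (fun i => f (S i)) N = rsum f N - f 0%nat + f N.
Proof. induction N; simpl; [lra|]. rewrite IHN. ring. Qed.

Lemma rsum_tele (f : nat -> R) N : rsum (fun i => f (S i) - f i) N = f N - f 0%nat.
Proof. induction N; simpl; [lra|]. rewrite IHN. ring. Qed.

Lemma rsum_nonneg (f : nat -> R) N : (forall i, (i < N)%nat -> 0 <= f i) -> 0 <= rsum f N.
Proof. intros H. replace 0 with (rsum (fun _ => 0) N). apply rsum_le; auto.
  rewrite rsum_const; ring. Qed.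

Lemma rsum_abs (f : nat -> R) N : Rabs (rsum f N) <= rsum (fun i => Rabs (f i)) N.
Proof. induction N; simpl. rewrite Rabs_R0; lra.
  eapply Rle_trans; [apply Rabs_triang|]. lra. Qed.

Lemma rsum_term_le (f : nat -> R) N i : (forall j, (j < N)%nat -> 0 <= f j) -> (i < N)%nat ->
  f i <= rsum f N.
Proof. induction N; intros H Hi; [lia|]. simpl.
  assert (0 <= rsum f N) by (apply rsum_nonneg; intros; apply H; lia).
  destruct (Nat.eq_dec i N).
  - subst. lra.
  - assert (f i <= rsum f N) by (apply IHN; [intros; apply H; lia| lia]).
    assert (0 <= f N) by (apply H; lia). lra.
Qed.

Lemma rsum_prefix_le (f : nat -> R) N M : (forall j, (j < N)%nat -> 0 <= f j) -> (M <= N)%nat ->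
  rsum f M <= rsum f N.
Proof. induction N; intros H HM.
  - replace M with 0%nat by lia. simpl; lra.
  - destruct (Nat.eq_dec M (S N)). subst; lra.
    simpl. assert (rsum f M <= rsum f N) by (apply IHN; [intros; apply H; lia|lia]).
    assert (0 <= f N) by (apply H; lia). lra.
Qed.

Lemma Pq_lub (rho : R -> R) q theta :
  (exists p, perimeters rho q theta p) -> (exists U, forall p, perimeters rho q theta p -> p <= U) ->
  is_lub (perimeters rho q theta) (Pq rho q theta).
Proof.
  intros Hne [U HU]. unfold Pq.
  apply epsilon_spec.
  destruct (completeness (perimeters rho q theta)) as [l Hl].
  - exists U. intros p Hp. apply HU; auto.
  - exact Hne.
  - exists l; exact Hl.
Qed.

Lemma Pq_le (rho : R -> R) q theta U :
  (exists p, perimeters rho q theta p) -> (forall p, perimeters rho q theta p -> p <= U) ->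
  Pq rho q theta <= U.
Proof. intros Hne HU. destruct (Pq_lub rho q theta Hne (ex_intro _ U HU)) as [_ H]. apply H. exact HU. Qed.

Lemma Pq_ge (rho : R -> R) q theta U phi :
  admissible q theta phi -> (forall p, perimeters rho q theta p -> p <= U) ->
  perimeter rho q phi <= Pq rho q theta.
Proof. intros Ha HU. assert (Hne : exists p, perimeters rho q theta p) by (eexists; exists phi; split; eauto).
  destruct (Pq_lub rho q theta Hne (ex_intro _ U HU)) as [H _]. apply H. exists phi; split; auto. Qed.

Definition reg (q : nat) (theta : R) (i : nat) : R := theta + 2 * (PI / INR q) * INR i.

Lemma reg_adm q theta : (1 <= q)%nat -> admissible q theta (reg q theta).
Proof.
  intros Hq. assert (HP := PI_RGT_0). assert (0 < INR q) by (apply lt_0_INR; lia).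
  unfold admissible, reg. repeat split.
  - simpl. ring.
  - field. lra.
  - intros i _. rewrite S_INR. assert (0 <= PI / INR q) by (apply Rlt_le; apply Rdiv_lt_0_compat; lra). lra.
Qed.

Lemma adm_sum q theta phi : admissible q theta phi ->
  rsum (fun i => phi (S i) - phi i) q = 2 * PI.
Proof. intros [H0 [Hq _]]. rewrite rsum_tele, H0, Hq. ring. Qed.

Lemma adm_gap q theta phi i : admissible q theta phi -> (i < q)%nat ->
  0 <= phi (S i) - phi i <= 2 * PI.
Proof.
  intros Ha Hi. destruct Ha as [H0 [Hq Hm]] eqn:E.
  split. - assert (H := Hm i Hi). lra.
  - rewrite <- (adm_sum q theta phi Ha).
    apply (rsum_term_le (fun i => phi (S i) - phi i)); auto.
    intros j Hj. assert (H := Hm j Hj). lra.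
Qed.

Definition gap (phi : nat -> R) i := phi (S i) - phi i.
Definition eta (q : nat) (phi : nat -> R) i := gap phi i / 2 - PI / INR q.

Lemma sum_eta q theta phi : (1 <= q)%nat -> admissible q theta phi -> rsum (eta q phi) q = 0.
Proof.
  intros Hq Ha. assert (0 < INR q) by (apply lt_0_INR; lia).
  unfold eta. rewrite rsum_minus, rsum_const.
  replace (rsum (fun i => gap phi i / 2) q) with (/2 * rsum (gap phi) q).
  2:{ rewrite <- rsum_scal. apply rsum_ext; intros; unfold Rdiv; ring. }
  unfold gap. rewrite (adm_sum q theta phi Ha). field. lra.
Qed.

Lemma dev_bound q theta phi i : (1 <= q)%nat -> admissible q theta phi -> (i <= q)%nat ->
  Rabs (phi i - reg q theta i) <= 2 * rsum (fun j => Rabs (eta q phi j)) q.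
Proof.
  intros Hq Ha Hi. assert (0 < INR q) by (apply lt_0_INR; lia).
  assert (E : phi i - reg q theta i = rsum (fun j => 2 * eta q phi j) i).
  { clear Hi. induction i.
    - simpl. destruct Ha as [H0 _]. rewrite H0. unfold reg. simpl. ring.
    - simpl rsum. rewrite <- IHi. unfold eta, gap, reg. rewrite S_INR. field. lra. }
  rewrite E. eapply Rle_trans; [apply rsum_abs|]. cbv beta.
  replace (rsum (fun j => Rabs (2 * eta q phi j)) i) with (2 * rsum (fun j => Rabs (eta q phi j)) i).
  2:{ rewrite <- rsum_scal. apply rsum_ext. intros. rewrite Rabs_mult, (Rabs_right 2) by lra. auto. }
  apply Rmult_le_compat_l; [lra|]. apply rsum_prefix_le; auto. intros; apply Rabs_pos.
Qed.

Lemma amgm (k c e x : R) : 0 < k -> - 2 * k * x ^ 2 + e * c * x <= e ^ 2 * c ^ 2 / (8 * k).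
Proof.
  intros Hk. assert (0 <= (4 * k * x - e * c) ^ 2) by apply pow2_ge_0.
  apply (Rmult_le_reg_r (8 * k)); [lra|].
  replace (e ^ 2 * c ^ 2 / (8 * k) * (8 * k)) with (e ^ 2 * c ^ 2) by (field; lra).
  nra.
Qed.

Lemma term_bound (x a e n1 n2 m1 m2 LH N0 : R) :
  0 < a <= PI / 2 -> 0 <= x <= PI -> 0 < e ->
  Rabs (n1 - m1) <= LH -> Rabs (n2 - m2) <= LH -> Rabs m1 <= N0 -> Rabs m2 <= N0 ->
  2 * sin x + e * (n1 + n2) * sin x <=
  2 * sin a + 2 * cos a * (x - a) - 2 * (sin (a / 2) / 8) * (x - a) ^ 2
  + e * (m1 + m2) * sin a + e * (2 * LH + 2 * N0 * Rabs (x - a)).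
Proof.
  intros Ha Hx He H1 H2 H3 H4.
  assert (Hc := sin_concave_strong a x Ha Hx).
  assert (Hs0 : 0 <= sin x) by (apply sin_ge_0; lra).
  assert (Hs1 : sin x <= 1) by apply SIN_bound.
  assert (Hl := sin_lip x a).
  assert ((n1 + n2) * sin x - (m1 + m2) * sin a <= 2 * LH + 2 * N0 * Rabs (x - a)).
  { replace ((n1 + n2) * sin x - (m1 + m2) * sin a) with
      ((n1 - m1) * sin x + (n2 - m2) * sin x + (m1 + m2) * (sin x - sin a)) by ring.
    assert ((n1 - m1) * sin x <= LH).
    { assert (Rabs ((n1 - m1) * sin x) <= LH).
      { rewrite Rabs_mult, (Rabs_right (sin x)) by lra.
        assert (0 <= Rabs (n1 - m1)) by apply Rabs_pos. nra. }
      apply Rabs_le_between in H. lra. }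
    assert ((n2 - m2) * sin x <= LH).
    { assert (Rabs ((n2 - m2) * sin x) <= LH).
      { rewrite Rabs_mult, (Rabs_right (sin x)) by lra.
        assert (0 <= Rabs (n2 - m2)) by apply Rabs_pos. nra. }
      apply Rabs_le_between in H0. lra. }
    assert ((m1 + m2) * (sin x - sin a) <= 2 * N0 * Rabs (x - a)).
    { assert (Rabs ((m1 + m2) * (sin x - sin a)) <= 2 * N0 * Rabs (x - a)).
      { rewrite Rabs_mult. assert (Rabs (m1 + m2) <= 2 * N0).
        { eapply Rle_trans; [apply Rabs_triang|]. lra. }
        apply Rmult_le_compat; auto; apply Rabs_pos. }
      apply Rabs_le_between in H5. lra. }
    lra. }
  assert (e * ((n1 + n2) * sin x - (m1 + m2) * sin a) <= e * (2 * LH + 2 * N0 * Rabs (x - a))).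
  { apply Rmult_le_compat_l; lra. }
  lra.
Qed.

Lemma chord_i (r n : R -> R) (q : nat) theta (phi : nat -> R) (e L W : R) i :
  admissible q theta phi -> (i < q)%nat -> 0 < e -> 0 <= L -> 0 <= W ->
  periodic2pi n -> (forall s t, Rabs (n s - n t) <= L * Rabs (s - t)) ->
  (forall t, Rabs (r t - (1 + e * n t)) <= W * e ^ 2) ->
  (forall t, 1/2 <= r t) ->
  dist2 (bx r (phi i)) (by_ r (phi i)) (bx r (phi (S i))) (by_ r (phi (S i))) <=
  (r (phi i) + r (phi (S i))) * sin (gap phi i / 2)
  + (2 * (2 * (L + 2 * W)) + 32 * (2 * (L + 2 * W)) ^ 2) * e ^ 2.
Proof.
  intros Ha Hi He HL HW Hnp HLip Hr Hr2.
  assert (HP := PI_RGT_0). assert (HP4 := PI_4).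
  rewrite chord_formula. unfold gap.
  assert (Hg := adm_gap q theta phi i Ha Hi).
  set (d := phi (S i) - phi i) in *.
  assert (H1 := Hr (phi i)). assert (H2 := Hr (phi (S i))).
  assert (H1' := Hr2 (phi i)). assert (H2' := Hr2 (phi (S i))).
  assert (We : 0 <= W * e ^ 2) by (apply Rmult_le_pos; [lra|apply pow2_ge_0]).
  destruct (Rle_dec d PI) as [Hd|Hd].
  - assert (Hs : (d/2)/4 <= sin (d / 2)) by (apply sin_lin; lra).
    apply (chord_upper _ _ _ _ (d / 2)); try lra.
    assert (Hn := HLip (phi i) (phi (S i))).
      replace (phi i - phi (S i)) with (- d) in Hn by (unfold d; ring).
      rewrite Rabs_Ropp, (Rabs_right d) in Hn by lra.
      apply Rabs_le_between in H1. apply Rabs_le_between in H2.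
      apply Rabs_le_between in Hn.
      assert (e * (n (phi i) - n (phi (S i))) <= e * (L * d)) by (apply Rmult_le_compat_l; lra).
      assert (e * (- (L * d)) <= e * (n (phi i) - n (phi (S i)))) by (apply Rmult_le_compat_l; lra).
      assert (0 <= L * e ^ 2) by (apply Rmult_le_pos; [lra|apply pow2_ge_0]).
      assert (0 <= W * (e * d)) by (apply Rmult_le_pos; [lra|apply Rmult_le_pos; lra]).
      apply Rabs_le. split; nra.
  - assert (Hs : ((2 * PI - d)/2)/4 <= sin (d / 2)).
    { rewrite <- sin_PI_x. replace (PI - d / 2) with ((2 * PI - d) / 2) by field.
      apply sin_lin. lra. }
    apply (chord_upper _ _ _ _ ((2 * PI - d) / 2)); try lra.
    assert (Hn := HLip (phi i) (phi (S i) - 2 * PI)).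
      assert (Hper := Hnp (phi (S i) - 2 * PI)).
      replace (phi (S i) - 2 * PI + 2 * PI) with (phi (S i)) in Hper by ring.
      rewrite <- Hper in Hn.
      replace (phi i - (phi (S i) - 2 * PI)) with (2 * PI - d) in Hn by (unfold d; ring).
      rewrite (Rabs_right (2 * PI - d)) in Hn by lra.
      apply Rabs_le_between in H1. apply Rabs_le_between in H2.
      apply Rabs_le_between in Hn.
      assert (e * (n (phi i) - n (phi (S i))) <= e * (L * (2 * PI - d))) by (apply Rmult_le_compat_l; lra).
      assert (e * (- (L * (2 * PI - d))) <= e * (n (phi i) - n (phi (S i)))) by (apply Rmult_le_compat_l; lra).
      assert (0 <= L * e ^ 2) by (apply Rmult_le_pos; [lra|apply pow2_ge_0]).
      assert (0 <= W * (e * (2 * PI - d))) by (apply Rmult_le_pos; [lra|apply Rmult_le_pos; lra]).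
      apply Rabs_le. split; nra.
Qed.

Lemma rsum_lin (c0 c1 c2 c3 : R) (f1 f2 f3 : nat -> R) N :
  rsum (fun i => c0 + c1 * f1 i + c2 * f2 i + c3 * f3 i) N =
  INR N * c0 + c1 * rsum f1 N + c2 * rsum f2 N + c3 * rsum f3 N.
Proof.
  rewrite !rsum_plus, !rsum_scal, rsum_const. ring.
Qed.

Definition Cup (q : nat) (N0 L W : R) : R :=
  INR q * ((2 * (2 * (L + 2 * W)) + 32 * (2 * (L + 2 * W)) ^ 2) + 2 * W
           + (2 * N0 + 4 * INR q * L) ^ 2 / (8 * (sin (PI / INR q / 2) / 8))).

Lemma per_upper (r n : R -> R) (q : nat) theta (phi : nat -> R) (e N0 L W : R) :
  (2 <= q)%nat -> admissible q theta phi -> 0 < e -> 0 <= L -> 0 <= W ->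
  periodic2pi n -> (forall t, Rabs (n t) <= N0) ->
  (forall s t, Rabs (n s - n t) <= L * Rabs (s - t)) ->
  (forall t, Rabs (r t - (1 + e * n t)) <= W * e ^ 2) ->
  (forall t, 1/2 <= r t) ->
  perimeter r q phi <= 2 * INR q * sin (PI / INR q)
    + e * (2 * sin (PI / INR q) * rsum (fun i => n (reg q theta i)) q) + Cup q N0 L W * e ^ 2.
Proof.
  intros Hq Ha He HL HW Hnp HN HLip Hr Hr2.
  assert (HP := PI_RGT_0). assert (HP4 := PI_4).
  assert (Hq0 : 2 <= INR q) by (replace 2 with (INR 2) by (simpl; lra); apply le_INR; lia).
  set (a := PI / INR q).
  assert (Ha0 : 0 < a <= PI / 2).
  { unfold a. split. apply Rdiv_lt_0_compat; lra.
    apply Rmult_le_compat_l. lra. apply Rinv_le_contravar; lra. }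
  set (k := sin (a / 2) / 8).
  assert (Hk : 0 < k). { unfold k. assert (0 < sin (a/2)) by (apply sin_gt_0; lra). lra. }
  set (K' := 2 * (L + 2 * W)). set (E := 2 * K' + 32 * K' ^ 2).
  set (K2 := 2 * N0 + 4 * INR q * L).
  set (H := rsum (fun j => Rabs (eta q phi j)) q).
  set (m := fun i => n (reg q theta i)).
  set (F := fun i => (2 * sin a + (e ^ 2 * K2 ^ 2 / (8 * k)) + e * (4 * L * H) + (E + 2 * W) * e ^ 2)
                     + (2 * cos a) * eta q phi i + (e * sin a) * (m i + m (S i))
                     + (- (e * (4 * INR q * L))) * Rabs (eta q phi i)).
  apply Rle_trans with (rsum F q).
  - unfold perimeter. apply rsum_le. intros i Hi.
    eapply Rle_trans; [apply (chord_i r n q theta phi e L W i); auto|].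
    fold K'. fold E.
    assert (Hg := adm_gap q theta phi i Ha Hi).
    set (x := gap phi i / 2).
    assert (Hx : 0 <= x <= PI) by (unfold x, gap; lra).
    assert (Hs0 : 0 <= sin x) by (apply sin_ge_0; lra).
    assert (Hs1 : sin x <= 1) by apply SIN_bound.
    assert (Hb1 : r (phi i) <= 1 + e * n (phi i) + W * e ^ 2).
    { assert (h := Hr (phi i)). apply Rabs_le_between in h. lra. }
    assert (Hb2 : r (phi (S i)) <= 1 + e * n (phi (S i)) + W * e ^ 2).
    { assert (h := Hr (phi (S i))). apply Rabs_le_between in h. lra. }
    assert (P2 : (r (phi i) + r (phi (S i))) * sin x <=
                 2 * sin x + e * (n (phi i) + n (phi (S i))) * sin x + 2 * W * e ^ 2).
    { assert ((r (phi i) + r (phi (S i))) * sin x <=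
              (2 + e * (n (phi i) + n (phi (S i))) + 2 * W * e ^ 2) * sin x)
        by (apply Rmult_le_compat_r; lra).
      assert (0 <= W * e ^ 2) by (apply Rmult_le_pos; [lra|apply pow2_ge_0]).
      assert (2 * W * e ^ 2 * sin x <= 2 * W * e ^ 2 * 1) by (apply Rmult_le_compat_l; lra).
      nra. }
    assert (Hd1 : Rabs (n (phi i) - m i) <= 2 * L * H).
    { unfold m. eapply Rle_trans; [apply HLip|].
      assert (h := dev_bound q theta phi i ltac:(lia) Ha ltac:(lia)). fold H in h. nra. }
    assert (Hd2 : Rabs (n (phi (S i)) - m (S i)) <= 2 * L * H).
    { unfold m. eapply Rle_trans; [apply HLip|].
      assert (h := dev_bound q theta phi (S i) ltac:(lia) Ha ltac:(lia)). fold H in h. nra. }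
    assert (P3 := term_bound x a e (n (phi i)) (n (phi (S i))) (m i) (m (S i)) (2 * L * H) N0
                   Ha0 Hx He Hd1 Hd2 (HN _) (HN _)).
    assert (Hxa : x - a = eta q phi i) by (unfold x, eta, a; ring).
    rewrite Hxa in P3.
    assert (P4 := amgm k K2 e (Rabs (eta q phi i)) Hk).
    rewrite <- Rsqr_pow2, <- Rsqr_abs, Rsqr_pow2 in P4.
    unfold F. fold k in P3. unfold K2 in P4 |- *.
    lra.
  - unfold F. rewrite rsum_lin.
    rewrite (sum_eta q theta phi ltac:(lia) Ha). fold H.
    rewrite rsum_plus, rsum_shift.
    replace (m q) with (m 0%nat).
    2:{ unfold m, reg. simpl. replace (theta + 2 * (PI / INR q) * INR q) with (theta + 2 * PI) by (field; lra).
        rewrite Hnp. f_equal. ring. }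
    unfold Cup. fold a. fold k. fold K'. fold E. fold K2. fold m.
    assert (E1 : e ^ 2 * K2 ^ 2 / (8 * k) = K2 ^ 2 / (8 * k) * e ^ 2) by (field; lra).
    rewrite E1. ring_simplify. lra.
Qed.

Lemma a_facts (q : nat) : (2 <= q)%nat -> 0 < PI / INR q <= PI / 2 /\ 2 <= INR q.
Proof.
  intros Hq. assert (HP := PI_RGT_0).
  assert (Hq0 : 2 <= INR q) by (replace 2 with (INR 2) by (simpl; lra); apply le_INR; lia).
  split; auto. split. apply Rdiv_lt_0_compat; lra.
  apply Rmult_le_compat_l. lra. apply Rinv_le_contravar; lra.
Qed.

Lemma reg_gap q theta i : (2 <= q)%nat -> gap (reg q theta) i / 2 = PI / INR q.
Proof. intros Hq. destruct (a_facts q Hq) as [_ H]. unfold gap, reg. rewrite S_INR. field. lra. Qed.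

Lemma reg_last q theta : (2 <= q)%nat -> reg q theta q = theta + 2 * PI.
Proof. intros Hq. destruct (a_facts q Hq) as [_ H]. unfold reg. field. lra. Qed.

Lemma per_lower (r n : R -> R) (q : nat) theta (e W : R) :
  (2 <= q)%nat -> 0 <= e -> periodic2pi r ->
  (forall t, Rabs (r t - (1 + e * n t)) <= W * e ^ 2) -> (forall t, 0 <= r t) ->
  2 * INR q * sin (PI / INR q) + e * (2 * sin (PI / INR q) * rsum (fun i => n (reg q theta i)) q)
  - 2 * sin (PI / INR q) * INR q * W * e ^ 2 <= perimeter r q (reg q theta).
Proof.
  intros Hq He Hrp Hr Hr0.
  destruct (a_facts q Hq) as [Ha Hq0]. assert (HP := PI_RGT_0).
  set (a := PI / INR q) in *.
  assert (HS0 : 0 <= sin a) by (apply sin_ge_0; lra).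
  assert (HS1 : sin a <= 1) by apply SIN_bound.
  set (rr := fun i => r (reg q theta i)).
  apply Rle_trans with (rsum (fun i => sin a * (rr i + rr (S i))) q).
  - rewrite rsum_scal, rsum_plus, rsum_shift.
    replace (rr q) with (rr 0%nat).
    2:{ unfold rr. rewrite reg_last by auto. rewrite Hrp. unfold reg. simpl. f_equal. ring. }
    assert (Hs : rsum (fun i => 1 + e * n (reg q theta i) - W * e ^ 2) q <= rsum rr q).
    { apply rsum_le. intros i _. unfold rr. assert (h := Hr (reg q theta i)).
      apply Rabs_le_between in h. lra. }
    rewrite rsum_minus, rsum_plus, rsum_const, rsum_const, rsum_scal in Hs.
    assert (sin a * (2 * (INR q * 1 + e * rsum (fun i => n (reg q theta i)) q - INR q * (W * e ^ 2)))
            <= sin a * (2 * rsum rr q)) by (apply Rmult_le_compat_l; lra).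
    lra.
  - unfold perimeter. apply rsum_le. intros i Hi.
    rewrite chord_formula. fold (gap (reg q theta) i). rewrite reg_gap by auto. fold a.
    unfold rr. rewrite Rmult_comm. apply chord_lower; auto.
Qed.

Lemma unit_disk_Pq q theta : (2 <= q)%nat -> Pq unit_disk_rho q theta = 2 * INR q * sin (PI / INR q).
Proof.
  intros Hq. destruct (a_facts q Hq) as [Ha Hq0]. assert (HP := PI_RGT_0).
  set (a := PI / INR q) in *.
  assert (Hper : forall phi, admissible q theta phi ->
     perimeter unit_disk_rho q phi = rsum (fun i => 2 * sin (gap phi i / 2)) q).
  { intros phi Hadm. unfold perimeter. apply rsum_ext. intros i Hi. rewrite chord_formula.
    unfold unit_disk_rho. fold (gap phi i).
    replace ((1 - 1) ^ 2 + 4 * 1 * 1 * sin (gap phi i / 2) ^ 2) with ((2 * sin (gap phi i / 2)) ^ 2) by ring.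
    apply sqrt_pow2. assert (h := adm_gap q theta phi i Hadm Hi). unfold gap.
    assert (0 <= sin ((phi (S i) - phi i) / 2)) by (apply sin_ge_0; lra). lra. }
  assert (Hup : forall p, perimeters unit_disk_rho q theta p -> p <= 2 * INR q * sin a).
  { intros p [phi [Hadm ->]]. rewrite (Hper phi Hadm).
    apply Rle_trans with (rsum (fun i => 2 * sin a + 2 * cos a * eta q phi i) q).
    - apply rsum_le. intros i Hi. assert (h := adm_gap q theta phi i Hadm Hi).
      assert (c := sin_concave_strong a (gap phi i / 2) Ha ltac:(unfold gap; lra)).
      assert (0 <= sin (a / 2) / 8 * (gap phi i / 2 - a) ^ 2).
      { apply Rmult_le_pos; [|apply pow2_ge_0]. assert (0 <= sin (a/2)) by (apply sin_ge_0; lra). lra. }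
      unfold eta. fold a. lra.
    - rewrite rsum_plus, rsum_const, rsum_scal, (sum_eta q theta phi ltac:(lia) Hadm). lra. }
  apply Rle_antisym.
  - apply Pq_le; auto. exists (perimeter unit_disk_rho q (reg q theta)). exists (reg q theta).
    split; auto. apply reg_adm; lia.
  - eapply Rle_trans; [|apply (Pq_ge _ _ _ _ (reg q theta) (reg_adm q theta ltac:(lia)) Hup)].
    rewrite (Hper _ (reg_adm q theta ltac:(lia))).
    rewrite (rsum_ext _ (fun _ => 2 * sin a)). rewrite rsum_const. lra.
    intros i _. rewrite reg_gap; auto.
Qed.

Lemma geom_main (n m : R -> R) (rho : R -> R -> R) (q : nat) (N0 L M0 : R) :
  (2 <= q)%nat -> periodic2pi n -> (forall t, Rabs (n t) <= N0) -> 0 <= L ->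
  (forall s t, Rabs (n s - n t) <= L * Rabs (s - t)) -> (forall t, Rabs (m t) <= M0) ->
  (forall e, 0 < e -> periodic2pi (rho e)) ->
  (exists C d, 0 < d /\ forall e t, 0 < e < d ->
            Rabs (rho e t - (1 + e * n t + e ^ 2 * m t)) <= C * e ^ 3) ->
  exists C d, 0 < d /\ forall theta e, 0 < e < d ->
    Rabs (Pq (rho e) q theta - (2 * INR q * sin (PI / INR q)
          + 2 * e * INR q * sin (PI / INR q) * (/ INR q * rsum (fun i => n (reg q theta i)) q)))
    <= C * e ^ 2.
Proof.
  intros Hq Hnp HN HL HLip HM Hper [C0 [d0 [Hd0 Hexp]]].
  destruct (a_facts q Hq) as [Ha Hq0]. assert (HP := PI_RGT_0).
  assert (HM0 : 0 <= M0) by (eapply Rle_trans; [apply Rabs_pos|apply (HM 0)]).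
  assert (HN0 : 0 <= N0) by (eapply Rle_trans; [apply Rabs_pos|apply (HN 0)]).
  set (W := M0 + Rabs C0).
  assert (HW : 0 <= W) by (unfold W; assert (h := Rabs_pos C0); lra).
  set (d := Rmin d0 (Rmin 1 (/ (4 * (N0 + W + 1))))).
  assert (Hd1 : d <= 1) by (unfold d; eapply Rle_trans; [apply Rmin_r|apply Rmin_l]).
  assert (Hd2 : d <= / (4 * (N0 + W + 1))) by (unfold d; eapply Rle_trans; [apply Rmin_r|apply Rmin_r]).
  assert (Hd3 : d <= d0) by (unfold d; apply Rmin_l).
  assert (Hdp : 0 < d).
  { unfold d. apply Rmin_pos; auto. apply Rmin_pos; [lra|]. apply Rinv_0_lt_compat. lra. }
  set (S := sin (PI / INR q)).
  assert (HS0 : 0 <= S) by (apply sin_ge_0; lra).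
  assert (HS1 : S <= 1) by apply SIN_bound.
  exists (Rabs (Cup q N0 L W) + 2 * INR q * W), d. split; auto.
  intros theta e He.
  assert (Hr : forall t, Rabs (rho e t - (1 + e * n t)) <= W * e ^ 2).
  { intros t. assert (h := Hexp e t ltac:(lra)).
    assert (hm := HM t).
    replace (rho e t - (1 + e * n t)) with ((rho e t - (1 + e * n t + e ^ 2 * m t)) + e ^ 2 * m t) by ring.
    eapply Rle_trans; [apply Rabs_triang|]. rewrite Rabs_mult.
    rewrite (Rabs_right (e ^ 2)) by (apply Rle_ge, pow2_ge_0).
    assert (C0 * e ^ 3 <= Rabs C0 * e ^ 2).
    { assert (e ^ 3 <= e ^ 2) by (simpl; assert (0 <= e * e) by nra; nra).
      assert (C0 <= Rabs C0) by apply Rle_abs.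
      assert (0 <= e ^ 3) by (apply pow_le; lra).
      assert (0 <= Rabs C0) by apply Rabs_pos.
      nra. }
    assert (e ^ 2 * Rabs (m t) <= e ^ 2 * M0) by (apply Rmult_le_compat_l; [apply pow2_ge_0|auto]).
    unfold W. lra. }
  assert (Hr2 : forall t, 1/2 <= rho e t).
  { intros t. assert (h := Hr t). apply Rabs_le_between in h.
    assert (hn := HN t). apply Rabs_le_between in hn.
    assert (e * (N0 + W + 1) <= / 4).
    { apply Rle_trans with (d * (N0 + W + 1)). apply Rmult_le_compat_r; lra.
      apply Rle_trans with (/ (4 * (N0 + W + 1)) * (N0 + W + 1)). apply Rmult_le_compat_r; lra.
      right. field. lra. }
    assert (e * n t >= - (e * N0)) by nra.
    assert (W * e ^ 2 <= W * e) by (apply Rmult_le_compat_l; [auto|simpl; nra]).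
    nra. }
  assert (Hup : forall p, perimeters (rho e) q theta p ->
     p <= 2 * INR q * S + e * (2 * S * rsum (fun i => n (reg q theta i)) q) + Cup q N0 L W * e ^ 2).
  { intros p [phi [Hadm ->]]. apply per_upper; auto; lra. }
  assert (Hlo := per_lower (rho e) n q theta e W Hq ltac:(lra) (Hper e ltac:(lra)) Hr
                   ltac:(intros t; assert (h := Hr2 t); lra)).
  fold S in Hlo.
  assert (P1 : Pq (rho e) q theta <= 2 * INR q * S + e * (2 * S * rsum (fun i => n (reg q theta i)) q) + Cup q N0 L W * e ^ 2).
  { apply Pq_le; auto. exists (perimeter (rho e) q (reg q theta)). exists (reg q theta).
    split; auto. apply reg_adm; lia. }
  assert (P2 := Pq_ge (rho e) q theta _ (reg q theta) (reg_adm q theta ltac:(lia)) Hup).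
  replace (2 * e * INR q * S * (/ INR q * rsum (fun i => n (reg q theta i)) q))
     with (e * (2 * S * rsum (fun i => n (reg q theta i)) q)) by (field; lra).
  assert (Cup q N0 L W * e ^ 2 <= Rabs (Cup q N0 L W) * e ^ 2)
    by (apply Rmult_le_compat_r; [apply pow2_ge_0|apply Rle_abs]).
  assert (2 * S * INR q * W * e ^ 2 <= 2 * INR q * W * e ^ 2).
  { assert (0 <= INR q * W * e ^ 2) by (apply Rmult_le_pos; [nra|apply pow2_ge_0]). nra. }
  assert (0 <= Rabs (Cup q N0 L W) * e ^ 2) by (apply Rmult_le_pos; [apply Rabs_pos|apply pow2_ge_0]).
  assert (0 <= 2 * INR q * W * e ^ 2) by (apply Rmult_le_pos; [nra|apply pow2_ge_0]). apply Rabs_le. split; lra.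
Qed.

Lemma locally_R (x eps : R) (P : R -> Prop) : 0 < eps ->
  (forall y, Rabs (y - x) < eps -> P y) -> locally x P.
Proof.
  intros He H. exists (mkposreal eps He). intros y Hy. apply H.
  exact Hy.
Qed.

Lemma analytic_local (f : R -> R) x : real_analytic f ->
  exists r a, 0 < r /\ Rbar_lt r (CV_radius a) /\
    forall z, Rabs (z - x) < r -> f z = PSeries a (z - x).
Proof.
  intros Hf. destruct (Hf x) as [r [a [Hr H]]].
  assert (Hrad : forall y, Rabs y < r -> Rbar_le (Rabs y) (CV_radius a)).
  { intros y Hy.
    destruct (Rbar_lt_le_dec (CV_radius a) (Rabs y)) as [Hlt|Hle]; auto.
    exfalso. apply (CV_disk_outside a y Hlt).
    apply ex_series_lim_0. exists (f (y + x)).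
    apply is_series_Reals.
    assert (Hp := H (y + x) ltac:(replace (y + x - x) with y by ring; auto)).
    replace (y + x - x) with y in Hp by ring. exact Hp. }
  exists (r / 2), a. repeat split; [lra| |].
  - assert (h := Hrad (3 * r / 4) ltac:(rewrite Rabs_right; lra)).
    rewrite Rabs_right in h by lra.
    destruct (CV_radius a) as [c| |]; simpl in *; auto; lra.
  - intros z Hz. symmetry. apply is_pseries_unique. apply is_pseries_R.
    apply is_series_Reals. apply H. lra.
Qed.

Lemma analytic_C1 (f : R -> R) : real_analytic f ->
  forall x, ex_derive f x /\ continuous (Derive f) x.
Proof.
  intros Hf x. destruct (analytic_local f x Hf) as [r [a [Hr [Hcv Heq]]]].
  assert (Hloc : forall z, Rabs (z - x) < r ->
     locally z (fun t => f t = PSeries a (t - x))).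
  { intros z Hz. apply (locally_R z (r - Rabs (z - x))); [lra|].
    intros y Hy. apply Heq.
    assert (Rabs (y - x) <= Rabs (y - z) + Rabs (z - x)).
    { replace (y - x) with ((y - z) + (z - x)) by ring. apply Rabs_triang. }
    lra. }
  assert (Hcv' : forall z, Rabs (z - x) < r -> Rbar_lt (Rabs (z - x)) (CV_radius a)).
  { intros z Hz. destruct (CV_radius a) as [c| |]; simpl in *; auto; lra. }
  assert (Hder : forall z, Rabs (z - x) < r ->
     is_derive f z (PSeries (PS_derive a) (z - x))).
  { intros z Hz.
    apply (is_derive_ext_loc (fun t => PSeries a (t - x))).
    { apply (locally_R z (r - Rabs (z - x))); [lra|].
      intros y Hy. symmetry. apply Heq.
      assert (Rabs (y - x) <= Rabs (y - z) + Rabs (z - x)).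
      { replace (y - x) with ((y - z) + (z - x)) by ring. apply Rabs_triang. }
      lra. }
    assert (h := is_derive_PSeries a (z - x) (Hcv' z Hz)).
    assert (hd : is_derive (fun t : R => t - x) z 1).
    { auto_derive; auto. }
    assert (h2 := is_derive_comp (PSeries a) (fun t => t - x) z _ 1 h hd).
    replace (PSeries (PS_derive a) (z - x)) with (scal 1 (PSeries (PS_derive a) (z - x))). exact h2.
    unfold scal; simpl; unfold mult; simpl. ring. }
  split.
  - eexists. apply Hder. rewrite Rminus_eq_0, Rabs_R0. auto.
  - apply (continuous_ext_loc _ (fun z => PSeries (PS_derive a) (z - x))).
    + apply (locally_R x r); auto. intros y Hy. symmetry. apply is_derive_unique. apply Hder. auto.
    + apply (continuous_comp (fun z => z - x) (PSeries (PS_derive a))).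
      * apply (continuity_pt_filterlim (fun z => z - x)). apply derivable_continuous_pt. reg.
      * apply continuity_pt_filterlim. apply PSeries_continuity.
        rewrite CV_radius_derive. rewrite Rminus_eq_0, Rabs_R0.
        destruct (CV_radius a) as [c| |]; simpl in *; auto; lra.
Qed.

Lemma periodic_nat (f : R -> R) : periodic2pi f -> forall k t,
  f (t + 2 * PI * INR k) = f t /\ f (t - 2 * PI * INR k) = f t.
Proof.
  intros Hf k. induction k; intros t.
  - simpl. split; f_equal; ring.
  - rewrite S_INR. destruct (IHk t) as [H1 H2]. split.
    + replace (t + 2 * PI * (INR k + 1)) with ((t + 2 * PI * INR k) + 2 * PI) by ring.
      rewrite Hf. auto.
    + assert (h := Hf (t - 2 * PI * (INR k + 1))).
      replace (t - 2 * PI * (INR k + 1) + 2 * PI) with (t - 2 * PI * INR k) in h by ring.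
      rewrite <- h. auto.
Qed.

Lemma periodic_reduce (f : R -> R) : periodic2pi f -> forall t,
  exists u, 0 <= u <= 2 * PI /\ f t = f u.
Proof.
  intros Hf t. assert (HP := PI_RGT_0).
  destruct (archimed (t / (2 * PI))) as [H1 H2].
  set (z := (up (t / (2 * PI)) - 1)%Z).
  assert (Hz1 : IZR z <= t / (2 * PI)) by (unfold z; rewrite minus_IZR; simpl; lra).
  assert (Hz2 : t / (2 * PI) < IZR z + 1) by (unfold z; rewrite minus_IZR; simpl; lra).
  assert (Ha : 2 * PI * IZR z <= t).
  { apply (Rmult_le_compat_l (2 * PI)) in Hz1; [|lra].
    replace (2 * PI * (t / (2 * PI))) with t in Hz1 by (field; lra). lra. }
  assert (Hb : t < 2 * PI * IZR z + 2 * PI).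
  { apply (Rmult_lt_compat_l (2 * PI)) in Hz2; [|lra].
    replace (2 * PI * (t / (2 * PI))) with t in Hz2 by (field; lra). lra. }
  exists (t - 2 * PI * IZR z). split; [lra|].
  destruct (Z_le_gt_dec 0 z) as [Hz|Hz].
  - destruct (IZN z Hz) as [k ->]. rewrite <- INR_IZR_INZ.
    symmetry. apply (periodic_nat f Hf k t).
  - assert (Hz' : (0 <= - z)%Z) by lia.
    destruct (IZN (- z) Hz') as [k Hk].
    replace (IZR z) with (- INR k) by (rewrite INR_IZR_INZ, <- Hk, opp_IZR; ring).
    replace (t - 2 * PI * - INR k) with (t + 2 * PI * INR k) by ring.
    symmetry. apply (periodic_nat f Hf k t).
Qed.

Lemma periodic_bounded (f : R -> R) : periodic2pi f -> (forall x, continuity_pt f x) ->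
  exists M, forall t, Rabs (f t) <= M.
Proof.
  intros Hf Hc. assert (HP := PI_RGT_0).
  destruct (continuity_ab_maj (fun x => Rabs (f x)) 0 (2 * PI)) as [c [Hc1 _]].
  - lra.
  - intros x _. apply (continuity_pt_comp f Rabs). apply Hc. apply Rcontinuity_abs.
  - exists (Rabs (f c)). intros t. destruct (periodic_reduce f Hf t) as [u [Hu ->]].
    apply Hc1. auto.
Qed.

Lemma derive_periodic (f : R -> R) : periodic2pi f -> (forall x, ex_derive f x) ->
  periodic2pi (Derive f).
Proof.
  intros Hf Hd t. symmetry. apply is_derive_unique.
  assert (h := Derive_correct f (t + 2 * PI) (Hd _)).
  assert (hd : is_derive (fun s : R => s + 2 * PI) t 1) by (auto_derive; auto; ring).
  assert (h2 := is_derive_comp f (fun s => s + 2 * PI) t _ 1 h hd).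
  apply (is_derive_ext (fun s => f (s + 2 * PI))). intros; apply Hf.
  replace (Derive f (t + 2 * PI)) with (scal 1 (Derive f (t + 2 * PI))). exact h2.
  unfold scal; simpl; unfold mult; simpl. ring.
Qed.

Lemma lip_of_deriv (f : R -> R) L : (forall x, ex_derive f x) ->
  (forall x, Rabs (Derive f x) <= L) -> forall s t, Rabs (f s - f t) <= L * Rabs (s - t).
Proof.
  intros Hd HL s t.
  destruct (MVT_gen f t s (Derive f)) as [c [_ Hc]].
  - intros x _. apply Derive_correct. auto.
  - intros x _. apply continuity_pt_filterlim. apply (@ex_derive_continuous R_AbsRing R_NormedModule). auto.
  - rewrite Hc, Rabs_mult. apply Rmult_le_compat_r; [apply Rabs_pos| auto].
Qed.

Lemma analytic_facts (n : R -> R) : real_analytic n -> periodic2pi n ->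
  exists N0 L, 0 <= L /\ (forall t, Rabs (n t) <= N0) /\
    (forall s t, Rabs (n s - n t) <= L * Rabs (s - t)) /\
    (forall x, is_derive n x (Derive n x)) /\ (forall x, continuous (Derive n) x) /\
    (forall x, Rabs (Derive n x) <= L).
Proof.
  intros Ha Hp. assert (H := analytic_C1 n Ha).
  destruct (periodic_bounded n Hp) as [N0 HN0].
  { intros x. apply continuity_pt_filterlim. apply (@ex_derive_continuous R_AbsRing R_NormedModule). apply H. }
  destruct (periodic_bounded (Derive n)) as [L HL].
  { apply derive_periodic; auto. intros x; apply H. }
  { intros x. apply continuity_pt_filterlim. apply H. }
  exists N0, L. split; [|split; [|split; [|split; [|split]]]]; auto.
  - eapply Rle_trans; [apply Rabs_pos|apply (HL 0)].
  - apply lip_of_deriv; auto. intros; apply H.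
  - intros x. apply Derive_correct. apply H.
  - intros x. apply H.
Qed.

Lemma cont_mult (f g : R -> R) x : continuous f x -> continuous g x -> continuous (fun y => f y * g y) x.
Proof. intros. apply (continuous_mult f g); auto. Qed.
Lemma cont_plus (f g : R -> R) x : continuous f x -> continuous g x -> continuous (fun y => f y + g y) x.
Proof. intros. apply (continuous_plus f g); auto. Qed.
Lemma cont_opp (f : R -> R) x : continuous f x -> continuous (fun y => - f y) x.
Proof. intros. apply (continuous_opp f); auto. Qed.
Lemma cont_minus (f g : R -> R) x : continuous f x -> continuous g x -> continuous (fun y => f y - g y) x.
Proof. intros. apply (continuous_minus f g); auto. Qed.
Lemma cont_const (c : R) (x : R) : continuous (fun _ : R => c) x.
Proof. apply continuous_const. Qed.
Lemma cont_id x : continuous (fun y : R => y) x.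
Proof. apply continuous_id. Qed.
Lemma cont_comp (f g : R -> R) x : continuous f x -> continuous g (f x) -> continuous (fun y => g (f y)) x.
Proof. intros. apply (continuous_comp f g); auto. Qed.
Lemma cont_sin x : continuous sin x.
Proof. apply continuity_pt_filterlim. apply continuity_sin. Qed.
Lemma cont_cos x : continuous cos x.
Proof. apply continuity_pt_filterlim. apply continuity_cos. Qed.
Lemma cont_inv (f : R -> R) x : f x <> 0 -> continuous f x -> continuous (fun y => / f y) x.
Proof. intros H Hc. apply (cont_comp f Rinv). auto.
  apply continuity_pt_filterlim. apply continuity_pt_inv; auto. apply continuity_pt_id. Qed.
Lemma cont_of_derive (f : R -> R) x : ex_derive f x -> continuous f x.
Proof. apply (@ex_derive_continuous R_AbsRing R_NormedModule). Qed.

Ltac cont_step := match goal with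
  | |- continuous (fun _ => ?c) _ => apply cont_const
  | |- continuous (fun y => y) _ => apply cont_id
  | |- continuous (fun y => sin (@?f y)) _ => apply (cont_comp f sin); [|apply cont_sin]
  | |- continuous (fun y => cos (@?f y)) _ => apply (cont_comp f cos); [|apply cont_cos]
  | |- continuous (fun y => @?f y * @?g y) _ => apply (cont_mult f g)
  | |- continuous (fun y => @?f y / @?g y) _ => apply (cont_mult f (fun y => / g y))
  | |- continuous (fun y => @?f y + @?g y) _ => apply (cont_plus f g)
  | |- continuous (fun y => @?f y - @?g y) _ => apply (cont_minus f g)
  | |- continuous (fun y => - @?f y) _ => apply (cont_opp f)
  | |- continuous sin _ => apply cont_sin
  | |- continuous cos _ => apply cont_cos
  | |- continuous (Rmult ?c) _ => apply (cont_mult (fun _ => c) (fun y => y))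
  | |- continuous (Rplus ?c) _ => apply (cont_plus (fun _ => c) (fun y => y))
  | |- continuous (Rminus ?c) _ => apply (cont_minus (fun _ => c) (fun y => y))
  end; cbv beta.
Ltac cont := repeat cont_step.

Ltac req := match goal with |- ?x = ?y => change (@eq R x y) end.

Lemma RInt_plusR (f g : R -> R) a b : ex_RInt f a b -> ex_RInt g a b ->
  RInt (fun x => f x + g x) a b = RInt f a b + RInt g a b.
Proof. intros. exact (RInt_plus f g a b H H0). Qed.
Lemma RInt_minusR (f g : R -> R) a b : ex_RInt f a b -> ex_RInt g a b ->
  RInt (fun x => f x - g x) a b = RInt f a b - RInt g a b.
Proof. intros. exact (RInt_minus f g a b H H0). Qed.
Lemma RInt_scalR (f : R -> R) a b c : ex_RInt f a b ->
  RInt (fun x => c * f x) a b = c * RInt f a b.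
Proof. intros. exact (RInt_scal f a b c H). Qed.
Lemma RInt_constR (c a b : R) : RInt (fun _ => c) a b = (b - a) * c.
Proof. exact (RInt_const a b c). Qed.
Lemma RInt_ChaslesR (f : R -> R) a b c : ex_RInt f a b -> ex_RInt f b c ->
  RInt f a b + RInt f b c = RInt f a c.
Proof. intros. exact (RInt_Chasles f a b c H H0). Qed.
Lemma RInt_swapR (f : R -> R) a b : ex_RInt f a b -> RInt f b a = - RInt f a b.
Proof. intros. rewrite <- (opp_RInt_swap f a b H). reflexivity. Qed.

Lemma ex_RInt_cont (f : R -> R) a b : (forall x, continuous f x) -> ex_RInt f a b.
Proof. intros. apply (@ex_RInt_continuous R_CompleteNormedModule). intros; auto. Qed.

Lemma RInt_shift (f : R -> R) a b c : (forall x, continuous f x) ->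
  RInt (fun t => f (t + c)) a b = RInt f (a + c) (b + c).
Proof.
  intros Hc. assert (h := RInt_comp_lin f 1 c a b (ex_RInt_cont f _ _ Hc)).
  replace (1 * a + c) with (a + c) in h by ring. replace (1 * b + c) with (b + c) in h by ring.
  rewrite <- h. apply RInt_ext. intros x _. unfold scal; simpl; unfold mult; simpl.
  replace (1 * x + c) with (x + c) by ring. ring.
Qed.

Lemma RInt_reflect (f : R -> R) a b c : (forall x, continuous f x) ->
  RInt (fun t => f (c - t)) a b = RInt f (c - b) (c - a).
Proof.
  intros Hc. assert (h := RInt_comp_lin f (-1) c a b (ex_RInt_cont f _ _ Hc)).
  replace (-1 * a + c) with (c - a) in h by ring. replace (-1 * b + c) with (c - b) in h by ring.
  assert (h' : -1 * RInt (fun t => f (c - t)) a b = RInt f (c - a) (c - b)).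
  { rewrite <- h. rewrite <- RInt_scalR.
    - apply RInt_ext. intros x _. unfold scal; simpl; unfold mult; simpl.
      replace (-1 * x + c) with (c - x) by ring. ring.
    - apply ex_RInt_cont. intros; apply (cont_comp _ f); [cont|auto]. }
  rewrite (RInt_swapR f (c - a) (c - b)), <- h' by (apply ex_RInt_cont; auto).
  assert (Hy : forall y : R, y = - (-1 * y)) by (intros; ring). apply Hy.
Qed.

Lemma RInt_periodic (P : R -> R) a : (forall x, continuous P x) -> (forall t, P (t + 2 * PI) = P t) ->
  RInt P a (a + 2 * PI) = RInt P 0 (2 * PI).
Proof.
  intros Hc Hp.
  assert (E1 : RInt P a (a + 2 * PI) = RInt P a 0 + RInt P 0 (2 * PI) + RInt P (2 * PI) (a + 2 * PI)).
  { rewrite RInt_ChaslesR, RInt_ChaslesR; auto; apply ex_RInt_cont; auto. }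
  assert (E2 : RInt P (2 * PI) (a + 2 * PI) = RInt P 0 a).
  { assert (E := RInt_shift P 0 a (2 * PI) Hc). rewrite Rplus_0_l in E.
    rewrite <- E. apply RInt_ext; intros; apply Hp. }
  rewrite E1, E2, RInt_swapR by (apply ex_RInt_cont; auto). req. ring.
Qed.

Lemma RInt_periodic_shift (P : R -> R) c : (forall x, continuous P x) -> (forall t, P (t + 2 * PI) = P t) ->
  RInt (fun t => P (t + c)) 0 (2 * PI) = RInt P 0 (2 * PI).
Proof.
  intros Hc Hp. rewrite RInt_shift by auto. replace (2 * PI + c) with (c + 2 * PI) by ring.
  replace (0 + c) with c by ring. apply RInt_periodic; auto.
Qed.

Lemma RInt_defs (f : R -> R) a b : a <= b -> (forall x, continuous f x) ->
  Defs.RInt f a b = RInt f a b.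
Proof.
  intros Hab Hc.
  assert (pr : Riemann_integrable f a b).
  { apply continuity_implies_RiemannInt; auto. intros x _. apply continuity_pt_filterlim. apply Hc. }
  unfold Defs.RInt.
  assert (Hex : exists v, exists pr : Riemann_integrable f a b, RiemannInt pr = v)
    by (exists (RiemannInt pr); exists pr; auto).
  destruct (epsilon_spec (inhabits 0) (fun v => exists pr : Riemann_integrable f a b, RiemannInt pr = v) Hex)
    as [pr' Hpr'].
  rewrite <- Hpr'. symmetry. apply RInt_Reals.
Qed.

Definition Dk (M : nat) (u : R) : R := 1 + 2 * rsum (fun j => cos (INR (S j) * u)) M.

Lemma Dk_sin M u : Dk M u * sin (u / 2) = sin ((INR M + / 2) * u).
Proof.
  unfold Dk. induction M.
  - replace ((INR 0 + / 2) * u) with (u / 2) by (simpl; field). simpl. ring.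
  - cbn [rsum].
    replace ((1 + 2 * (rsum (fun j => cos (INR (S j) * u)) M + cos (INR (S M) * u))) * sin (u / 2))
      with ((1 + 2 * rsum (fun j => cos (INR (S j) * u)) M) * sin (u / 2) + 2 * cos (INR (S M) * u) * sin (u / 2)) by ring.
    rewrite IHM. rewrite S_INR.
    assert (E := form4 ((INR M + 1 + / 2) * u) ((INR M + / 2) * u)).
    replace (((INR M + 1 + / 2) * u + (INR M + / 2) * u) / 2) with ((INR M + 1) * u) in E by field.
    replace (((INR M + 1 + / 2) * u - (INR M + / 2) * u) / 2) with (u / 2) in E by field.
    lra.
Qed.

Lemma Dk_even M u : Dk M (- u) = Dk M u.
Proof. unfold Dk. f_equal. f_equal. apply rsum_ext. intros. rewrite <- cos_neg. f_equal. ring. Qed.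

Lemma Dk_per M u : Dk M (u + 2 * PI) = Dk M u.
Proof. unfold Dk. f_equal. f_equal. apply rsum_ext. intros i _.
  replace (INR (S i) * (u + 2 * PI)) with (INR (S i) * u + 2 * INR (S i) * PI) by ring.
  apply cos_period. Qed.

Lemma Dk_cont M x : continuous (Dk M) x.
Proof.
  unfold Dk. apply cont_plus. apply cont_const. apply cont_mult. apply cont_const.
  induction M; cbn [rsum]. apply cont_const. apply cont_plus; auto. cont.
Qed.

Lemma cos_int_gen (c : R) : 0 < c -> sin (c * PI) = 0 -> RInt (fun u => cos (c * u)) 0 PI = 0.
Proof.
  intros Hc Hs.
  assert (H := is_RInt_derive (fun u => sin (c * u) / c) (fun u => cos (c * u)) 0 PI).
  apply is_RInt_unique in H.
  - rewrite H. rewrite Rmult_0_r, sin_0, Hs. unfold minus, plus, opp. simpl. lra.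
  - intros x _. auto_derive; auto. field. lra.
  - intros x _. cont.
Qed.

Lemma cos_int k : RInt (fun u => cos (INR (S k) * u)) 0 PI = 0.
Proof.
  apply cos_int_gen. apply lt_0_INR; lia.
  apply sin_eq_0_1. exists (Z.of_nat (S k)). rewrite <- INR_IZR_INZ. ring.
Qed.

Lemma rsum_cos_cont M x : continuous (fun u => rsum (fun j => cos (INR (S j) * u)) M) x.
Proof. induction M; cbn [rsum]. apply cont_const. apply cont_plus; auto. cont. Qed.

Lemma rsum_cos_int M : RInt (fun u => rsum (fun j => cos (INR (S j) * u)) M) 0 PI = 0.
Proof.
  induction M; cbn [rsum].
  - rewrite RInt_constR. req. ring.
  - rewrite (RInt_plusR (fun u => rsum (fun j => cos (INR (S j) * u)) M) (fun u => cos (INR (S M) * u))).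
    + rewrite IHM, cos_int. req. ring.
    + apply ex_RInt_cont. apply rsum_cos_cont.
    + apply ex_RInt_cont. intros; cont.
Qed.

Lemma Dk_int M : RInt (Dk M) 0 PI = PI.
Proof.
  unfold Dk.
  rewrite (RInt_plusR (fun _ => 1) (fun u => 2 * rsum (fun j => cos (INR (S j) * u)) M)).
  - rewrite RInt_constR, (RInt_scalR (fun u => rsum (fun j => cos (INR (S j) * u)) M)), rsum_cos_int.
    req. ring. apply ex_RInt_cont. apply rsum_cos_cont.
  - apply ex_RInt_cont. intros; cont.
  - apply ex_RInt_cont. intros; apply cont_mult. cont. apply rsum_cos_cont.
Qed.

Lemma sin_half_lb u : 0 <= u <= PI -> u / 8 <= sin (u / 2).
Proof. intros. assert (h := sin_lin (u / 2)). assert (HP := PI_RGT_0). lra. Qed.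

Lemma ibp_piece (H H' : R -> R) (L lam d : R) :
  0 <= L -> 0 < lam -> 0 < d <= PI ->
  (forall u, is_derive H u (H' u)) -> (forall u, continuous H' u) ->
  (forall u, 0 <= u <= PI -> Rabs (H u) <= L * u) -> (forall u, Rabs (H' u) <= L) ->
  Rabs (RInt (fun u => H u / sin (u / 2) * sin (lam * u)) d PI) <= (16 * L + 768 * L / d ^ 2) / lam.
Proof.
  intros HL Hlam Hd Hder Hc' HH HH'.
  assert (HP := PI_RGT_0). assert (HP4 := PI_4).
  assert (HcH : forall u, continuous H u) by (intros; apply cont_of_derive; eexists; apply Hder).
  set (psi := fun u => H u / sin (u / 2)).
  set (dpsi := fun u => (H' u * sin (u / 2) - H u * (cos (u / 2) / 2)) / (sin (u / 2)) ^ 2).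
  set (Fp := fun u => - psi u * cos (lam * u) / lam).
  set (dF := fun u => psi u * sin (lam * u) - dpsi u * cos (lam * u) / lam).
  assert (Hsin : forall u, d <= u <= PI -> d / 8 <= sin (u / 2)).
  { intros u Hu. assert (h := sin_half_lb u ltac:(lra)). lra. }
  assert (Hpsi_c : forall u, d <= u <= PI -> continuous psi u).
  { intros u Hu. unfold psi. apply cont_mult. apply HcH. apply cont_inv; cbv beta. assert (h := Hsin u Hu). lra. cont. }
  assert (Hdpsi_c : forall u, d <= u <= PI -> continuous dpsi u).
  { intros u Hu. unfold dpsi. apply cont_mult.
    - apply cont_minus. apply cont_mult. apply Hc'. cont. apply cont_mult. apply HcH. cont.
    - apply cont_inv; cbv beta. assert (h := Hsin u Hu). apply pow_nonzero. lra.
      apply (cont_comp (fun y => sin (y / 2)) (fun z => z ^ 2)). cont.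
      apply cont_of_derive. auto_derive. auto. }
  assert (Hpsi_b : forall u, d <= u <= PI -> Rabs (psi u) <= 8 * L).
  { intros u Hu. unfold psi. assert (h := Hsin u Hu). assert (h2 := sin_half_lb u ltac:(lra)).
    rewrite Rabs_div by lra. rewrite (Rabs_right (sin (u / 2))) by lra.
    assert (h3 := HH u ltac:(lra)).
    apply (Rmult_le_reg_r (sin (u / 2))); [lra|].
    replace (Rabs (H u) / sin (u / 2) * sin (u / 2)) with (Rabs (H u)) by (field; lra).
    nra. }
  assert (Hdpsi_b : forall u, d <= u <= PI -> Rabs (dpsi u) <= 192 * L / d ^ 2).
  { intros u Hu. unfold dpsi. assert (h := Hsin u Hu).
    assert (hs1 : Rabs (sin (u / 2)) <= 1) by (apply Rabs_le; split; apply SIN_bound).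
    assert (hc1 : Rabs (cos (u / 2)) <= 1) by (apply Rabs_le; split; apply COS_bound).
    assert (hn : Rabs (H' u * sin (u / 2) - H u * (cos (u / 2) / 2)) <= 3 * L).
    { eapply Rle_trans; [apply Rabs_triang|]. rewrite Rabs_Ropp, !Rabs_mult.
      assert (h1 := HH' u). assert (h2 := HH u ltac:(lra)).
      rewrite Rabs_div by lra. rewrite (Rabs_right 2) by lra.
      assert (Rabs (H' u) * Rabs (sin (u / 2)) <= L * 1) by (apply Rmult_le_compat; auto; apply Rabs_pos).
      assert (Rabs (H u) * (Rabs (cos (u / 2)) / 2) <= (L * u) * (1 / 2)).
      { apply Rmult_le_compat; auto. apply Rabs_pos. assert (0 <= Rabs (cos (u/2))) by apply Rabs_pos. lra. lra. }
      assert (L * u <= L * 4) by (apply Rmult_le_compat_l; lra). lra. }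
    rewrite Rabs_div by (apply pow_nonzero; lra).
    assert (hp : (d / 8) ^ 2 <= Rabs (sin (u / 2) ^ 2)).
    { rewrite Rabs_right by (apply Rle_ge, pow2_ge_0). apply pow_incr. lra. }
    assert (0 < d ^ 2) by (apply pow_lt; lra).
    apply Rle_trans with (3 * L / ((d / 8) ^ 2)).
    - assert (0 < (d/8)^2) by (apply pow_lt; lra).
      unfold Rdiv at 1 2. apply Rmult_le_compat; auto. apply Rabs_pos. left; apply Rinv_0_lt_compat. lra.
      apply Rinv_le_contravar; auto.
    - right. field. lra. }
  assert (Hftc : RInt dF d PI = Fp PI - Fp d).
  { apply is_RInt_unique.
    assert (h := is_RInt_derive Fp dF d PI).
    rewrite Rmin_left, Rmax_right in h by lra.
    apply h.
    - intros u Hu. assert (hs := Hsin u Hu).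
      unfold Fp, dF, dpsi, psi.
      auto_derive.
      + split. exists (H' u). apply Hder. split. lra. auto.
      + replace (Derive (fun x : R => H x) u) with (H' u) by (symmetry; apply is_derive_unique; apply Hder). req. change (sin (u * / 2)) with (sin (u / 2)). change (cos (u * / 2)) with (cos (u / 2)). field. lra.
    - intros u Hu. unfold dF. apply cont_minus. apply cont_mult. auto. cont.
      apply cont_mult. apply cont_mult. auto. cont. cont. }
  assert (Hex1 : ex_RInt (fun u => psi u * sin (lam * u)) d PI).
  { apply (@ex_RInt_continuous R_CompleteNormedModule). rewrite Rmin_left, Rmax_right by lra.
    intros u Hu. apply cont_mult. auto. cont. }
  assert (Hex2 : ex_RInt (fun u => dpsi u * cos (lam * u) / lam) d PI).
  { apply (@ex_RInt_continuous R_CompleteNormedModule). rewrite Rmin_left, Rmax_right by lra.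
    intros u Hu. apply cont_mult. apply cont_mult. auto. cont. cont. }
  assert (Hsplit : RInt (fun u => psi u * sin (lam * u)) d PI =
                   RInt dF d PI + RInt (fun u => dpsi u * cos (lam * u) / lam) d PI).
  { unfold dF. rewrite RInt_minusR by auto. req. lra. }
  change (Rabs (RInt (fun u => psi u * sin (lam * u)) d PI) <= (16 * L + 768 * L / d ^ 2) / lam). rewrite Hsplit, Hftc.
  assert (B1 : Rabs (Fp PI - Fp d) <= 16 * L / lam).
  { unfold Fp. assert (h1 := Hpsi_b PI ltac:(lra)). assert (h2 := Hpsi_b d ltac:(lra)).
    assert (c1 : Rabs (cos (lam * PI)) <= 1) by (apply Rabs_le; split; apply COS_bound).
    assert (c2 : Rabs (cos (lam * d)) <= 1) by (apply Rabs_le; split; apply COS_bound).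
    replace (- psi PI * cos (lam * PI) / lam - - psi d * cos (lam * d) / lam)
      with ((psi d * cos (lam * d) - psi PI * cos (lam * PI)) / lam) by (field; lra).
    unfold Rdiv. rewrite Rabs_mult, Rabs_inv, (Rabs_right lam) by lra.
    apply Rmult_le_compat_r. left; apply Rinv_0_lt_compat; lra.
    eapply Rle_trans; [apply Rabs_triang|]. rewrite Rabs_Ropp, !Rabs_mult.
    assert (Rabs (psi d) * Rabs (cos (lam * d)) <= 8 * L * 1) by (apply Rmult_le_compat; auto; apply Rabs_pos).
    assert (Rabs (psi PI) * Rabs (cos (lam * PI)) <= 8 * L * 1) by (apply Rmult_le_compat; auto; apply Rabs_pos).
    lra. }
  assert (B2 : Rabs (RInt (fun u => dpsi u * cos (lam * u) / lam) d PI) <= 768 * L / d ^ 2 / lam).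
  { eapply Rle_trans. apply abs_RInt_le_const with (M := 192 * L / d ^ 2 / lam). lra. auto.
    - intros t Ht. assert (h := Hdpsi_b t Ht).
      assert (c1 : Rabs (cos (lam * t)) <= 1) by (apply Rabs_le; split; apply COS_bound).
      unfold Rdiv. rewrite !Rabs_mult, Rabs_inv, (Rabs_right lam) by lra.
      apply Rmult_le_compat_r. left; apply Rinv_0_lt_compat; lra.
      replace (192 * L * / d ^ 2) with (192 * L * / d ^ 2 * 1) by ring.
      apply Rmult_le_compat; auto; apply Rabs_pos.
    - assert (0 < d ^ 2) by (apply pow_lt; lra).
      assert (0 <= 192 * L / d ^ 2 / lam).
      { unfold Rdiv. apply Rmult_le_pos. apply Rmult_le_pos. lra. left; apply Rinv_0_lt_compat; lra.
        left; apply Rinv_0_lt_compat; lra. }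
      replace (768 * L / d ^ 2 / lam) with (4 * (192 * L / d ^ 2 / lam)) by (field; lra).
      apply Rmult_le_compat_r; lra. }
  eapply Rle_trans; [apply Rabs_triang|].
  replace ((16 * L + 768 * L / d ^ 2) / lam) with (16 * L / lam + 768 * L / d ^ 2 / lam) by (field; lra).
  lra.
Qed.

Lemma RL (H H' : R -> R) (L : R) :
  0 <= L -> (forall u, is_derive H u (H' u)) -> (forall u, continuous H' u) ->
  (forall u, 0 <= u <= PI -> Rabs (H u) <= L * u) -> (forall u, Rabs (H' u) <= L) ->
  Un_cv (fun M => RInt (fun u => H u * Dk M u) 0 PI) 0.
Proof.
  intros HL Hder Hc' HH HH' eps Heps.
  assert (HP := PI_RGT_0). assert (HP4 := PI_4).
  assert (HcH : forall u, continuous H u) by (intros; apply cont_of_derive; eexists; apply Hder).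
  set (d := Rmin (PI / 2) (eps / (16 * L + 1))).
  assert (Hd0 : 0 < d) by (unfold d; apply Rmin_pos; [lra|apply Rdiv_lt_0_compat; lra]).
  assert (Hd1 : d <= PI / 2) by (unfold d; apply Rmin_l).
  assert (Hd2 : d <= eps / (16 * L + 1)) by (unfold d; apply Rmin_r).
  set (B := 16 * L + 768 * L / d ^ 2).
  assert (HB : 0 <= B).
  { unfold B. assert (0 < d ^ 2) by (apply pow_lt; lra).
    assert (0 <= 768 * L / d ^ 2) by (apply Rdiv_le_0_compat; lra). lra. }
  destruct (archimed (2 * B / eps)) as [Hup _].
  assert (Hz : (0 <= up (2 * B / eps))%Z).
  { apply le_IZR. assert (0 <= 2 * B / eps) by (apply Rdiv_le_0_compat; lra). simpl. lra. }
  destruct (IZN _ Hz) as [N HN].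
  exists N. intros M HM. unfold R_dist. rewrite Rminus_0_r.
  assert (HNM : 2 * B / eps < INR M).
  { rewrite HN, <- INR_IZR_INZ in Hup. assert (INR N <= INR M) by (apply le_INR; lia). lra. }
  set (lam := INR M + / 2).
  assert (Hlam : 0 < lam) by (unfold lam; assert (h := pos_INR M); lra).
  assert (Hcont : forall x, continuous (fun u => H u * Dk M u) x).
  { intros. apply cont_mult. apply HcH. apply Dk_cont. }
  rewrite <- (RInt_ChaslesR _ 0 d PI) by (apply ex_RInt_cont; auto).
  assert (P1 : Rabs (RInt (fun u => H u * Dk M u) 0 d) <= d * (8 * L)).
  { replace d with (d - 0) at 2 by ring.
    apply abs_RInt_le_const. lra. apply ex_RInt_cont; auto.
    intros t Ht. destruct (Req_dec t 0) as [Ht0|Ht0].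
    - subst t. assert (h := HH 0 ltac:(lra)). rewrite Rmult_0_r in h.
      assert (H 0 = 0) by (apply Rabs_eq_0; apply Rle_antisym; [auto|apply Rabs_pos]).
      rewrite H0, Rmult_0_l, Rabs_R0. lra.
    - assert (hs := sin_half_lb t ltac:(lra)).
      assert (hst : 0 < sin (t / 2)) by lra.
      assert (E : Dk M t = sin (lam * t) / sin (t / 2)).
      { unfold lam. rewrite <- (Dk_sin M t). field. lra. }
      rewrite E. rewrite Rabs_mult, Rabs_div by lra. rewrite (Rabs_right (sin (t / 2))) by lra.
      assert (h := HH t ltac:(lra)).
      assert (hsl : Rabs (sin (lam * t)) <= 1) by (apply Rabs_le; split; apply SIN_bound).
      apply Rle_trans with (L * t * (1 / (t / 8))).
      + apply Rmult_le_compat; try apply Rabs_pos; auto.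
        apply Rdiv_le_0_compat; [apply Rabs_pos|lra].
        unfold Rdiv. apply Rmult_le_compat; auto. apply Rabs_pos. left; apply Rinv_0_lt_compat; lra.
        apply Rinv_le_contravar; lra.
      + right. field. lra. }
  assert (P2 : Rabs (RInt (fun u => H u * Dk M u) d PI) <= B / lam).
  { rewrite (RInt_ext _ (fun u => H u / sin (u / 2) * sin (lam * u))).
    - apply (ibp_piece H H' L lam d); auto. lra.
    - intros x Hx. rewrite Rmin_left, Rmax_right in Hx by lra.
      assert (hs := sin_half_lb x ltac:(lra)).
      unfold lam. rewrite <- (Dk_sin M x). req. field. lra. }
  assert (P3 : d * (8 * L) < eps / 2).
  { apply Rle_lt_trans with (eps / (16 * L + 1) * (8 * L)).
    apply Rmult_le_compat_r; lra.
    apply (Rmult_lt_reg_r (16 * L + 1)); [lra|].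
    replace (eps / (16 * L + 1) * (8 * L) * (16 * L + 1)) with (8 * L * eps) by (field; lra). nra. }
  assert (P4 : B / lam < eps / 2).
  { apply (Rmult_lt_reg_r lam); [lra|].
    replace (B / lam * lam) with B by (field; lra).
    assert (2 * B / eps * eps = 2 * B) by (field; lra).
    assert (2 * B / eps < lam) by (unfold lam; lra).
    assert (2 * B / eps * eps < lam * eps) by (apply Rmult_lt_compat_r; lra). nra. }
  eapply Rle_lt_trans; [apply Rabs_triang|]. lra.
Qed.

Lemma Un_cv_ext (u v : nat -> R) l : (forall n, u n = v n) -> Un_cv u l -> Un_cv v l.
Proof. intros H Hu eps He. destruct (Hu eps He) as [N HN]. exists N. intros n Hn. rewrite <- H. auto. Qed.

Lemma Un_cv_const (c : R) : Un_cv (fun _ => c) c.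
Proof. intros eps He. exists 0%nat. intros. unfold R_dist. rewrite Rminus_eq_0, Rabs_R0. auto. Qed.

Definition SF (F : R -> R) (x : R) (M : nat) : R :=
  / (2 * PI) * RInt F 0 (2 * PI)
  + rsum (fun j => / PI * RInt (fun t => F t * cos (INR (S j) * (x - t))) 0 (2 * PI)) M.

Lemma lip_is_derive (F F' : R -> R) L : (forall x, is_derive F x (F' x)) ->
  (forall x, Rabs (F' x) <= L) -> forall s t, Rabs (F s - F t) <= L * Rabs (s - t).
Proof.
  intros Hd HL s t.
  destruct (MVT_gen F t s F') as [c [_ Hc]].
  - intros; apply Hd.
  - intros x _. apply continuity_pt_filterlim. apply cont_of_derive. eexists; apply Hd.
  - rewrite Hc, Rabs_mult. apply Rmult_le_compat_r; [apply Rabs_pos| auto].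
Qed.

Section Fourier.
Variables (F F' : R -> R) (L : R).
Hypothesis Hder : forall x, is_derive F x (F' x).
Hypothesis Hc' : forall x, continuous F' x.
Hypothesis HL : forall x, Rabs (F' x) <= L.
Hypothesis Hper : forall t, F (t + 2 * PI) = F t.

Lemma F_cont x : continuous F x.
Proof. apply cont_of_derive. eexists; apply Hder. Qed.

Lemma SF_kernel x M : SF F x M = / (2 * PI) * RInt (fun t => F t * Dk M (x - t)) 0 (2 * PI).
Proof.
  assert (HP := PI_RGT_0).
  assert (Hc : forall M x0, continuous (fun t => F t * Dk M (x - t)) x0).
  { intros. apply cont_mult. apply F_cont. apply (cont_comp (fun t => x - t) (Dk M0)). cont. apply Dk_cont. }
  unfold SF. induction M.
  - cbn [rsum]. rewrite Rplus_0_r. f_equal. apply RInt_ext. intros. unfold Dk. cbn [rsum]. req. ring.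
  - cbn [rsum]. rewrite <- Rplus_assoc. rewrite IHM.
    rewrite (RInt_ext (fun t => F t * Dk (S M) (x - t))
              (fun t => F t * Dk M (x - t) + 2 * (F t * cos (INR (S M) * (x - t))))).
    + rewrite RInt_plusR, (RInt_scalR (fun t => F t * cos (INR (S M) * (x - t)))).
      req. field. lra.
      apply ex_RInt_cont. intros; apply cont_mult. apply F_cont. cont.
      apply ex_RInt_cont. auto.
      apply ex_RInt_cont. intros. apply cont_mult. cont. apply cont_mult. apply F_cont. cont.
    + intros t _. unfold Dk. cbn [rsum]. req. ring.
Qed.

Lemma kernel_fold x M :
  RInt (fun t => F t * Dk M (x - t)) 0 (2 * PI) =
  RInt (fun u => F (x + u) * Dk M u) 0 PI + RInt (fun u => F (x - u) * Dk M u) 0 PI.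
Proof.
  assert (HP := PI_RGT_0).
  set (G := fun u => F (x - u) * Dk M u).
  assert (HG : forall y, continuous G y).
  { intros. unfold G. apply cont_mult. apply (cont_comp (fun u => x - u) F). cont. apply F_cont. apply Dk_cont. }
  assert (HGp : forall t, G (t + 2 * PI) = G t).
  { intros t. unfold G. rewrite Dk_per. f_equal.
    assert (h := Hper (x - (t + 2 * PI))). replace (x - (t + 2 * PI) + 2 * PI) with (x - t) in h by ring. auto. }
  rewrite (RInt_ext _ (fun t => G (x - t))).
  2:{ intros. unfold G. f_equal. f_equal. ring. }
  rewrite RInt_reflect by auto.
  replace (x - 2 * PI) with (x - 2 * PI) by ring.
  replace (x - 0) with ((x - 2 * PI) + 2 * PI) by ring.
  rewrite RInt_periodic by auto.
  rewrite <- (RInt_periodic G (- PI)) by auto.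
  replace (- PI + 2 * PI) with PI by ring.
  rewrite <- (RInt_ChaslesR G (- PI) 0 PI) by (apply ex_RInt_cont; auto).
  assert (E : RInt G (- PI) 0 = RInt (fun u => F (x + u) * Dk M u) 0 PI).
  { replace (- PI) with (0 - PI) by ring. replace (RInt G (0 - PI) 0) with (RInt G (0 - PI) (0 - 0)) by (f_equal; ring).
    rewrite <- RInt_reflect by auto. apply RInt_ext. intros u _. unfold G.
    rewrite <- (Dk_even M u). f_equal. f_equal. ring. f_equal. ring. }
  rewrite E. unfold G. req. ring.
Qed.

Lemma fourier_conv x : Un_cv (SF F x) (F x).
Proof.
  assert (HP := PI_RGT_0).
  assert (HL0 : 0 <= L) by (eapply Rle_trans; [apply Rabs_pos|apply (HL 0)]).
  assert (Hlip := lip_is_derive F F' L Hder HL).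
  assert (R1 := RL (fun u => F (x + u) - F x) (fun u => F' (x + u)) L HL0).
  assert (R2 := RL (fun u => F (x - u) - F x) (fun u => - F' (x - u)) L HL0).
  assert (C1 : Un_cv (fun M => RInt (fun u => (F (x + u) - F x) * Dk M u) 0 PI) 0).
  { apply R1.
    - intros u. assert (hd : is_derive (fun u => x + u) u 1) by (auto_derive; auto).
      assert (h := is_derive_comp F (fun u => x + u) u _ 1 (Hder (x + u)) hd).
      assert (h2 := is_derive_minus _ (fun _ => F x) u _ 0 h (is_derive_const (F x) u)).
      replace (F' (x + u)) with (minus (scal 1 (F' (x + u))) 0). exact h2.
      unfold minus, plus, opp, scal; simpl; unfold mult; simpl. ring.
    - intros u. apply (cont_comp (fun u => x + u) F'). cont. auto.
    - intros u Hu. replace (L * u) with (L * Rabs (x + u - x)). apply Hlip.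
      f_equal. replace (x + u - x) with u by ring. rewrite Rabs_right; lra.
    - intros u. auto. }
  assert (C2 : Un_cv (fun M => RInt (fun u => (F (x - u) - F x) * Dk M u) 0 PI) 0).
  { apply R2.
    - intros u. assert (hd : is_derive (fun u => x - u) u (-1)) by (auto_derive; auto; ring).
      assert (h := is_derive_comp F (fun u => x - u) u _ (-1) (Hder (x - u)) hd).
      assert (h2 := is_derive_minus _ (fun _ => F x) u _ 0 h (is_derive_const (F x) u)).
      replace (- F' (x - u)) with (minus (scal (-1) (F' (x - u))) 0). exact h2.
      unfold minus, plus, opp, scal; simpl; unfold mult; simpl. ring.
    - intros u. apply cont_opp. apply (cont_comp (fun u => x - u) F'). cont. auto.
    - intros u Hu. replace (L * u) with (L * Rabs (x - u - x)). apply Hlip.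
      f_equal. replace (x - u - x) with (- u) by ring. rewrite Rabs_Ropp, Rabs_right; lra.
    - intros u. rewrite Rabs_Ropp. auto. }
  assert (C := CV_plus _ _ _ _ (Un_cv_const (F x)) (CV_mult _ _ _ _ (Un_cv_const (/ (2 * PI))) (CV_plus _ _ _ _ C1 C2))).
  cbv beta in C. replace (F x + / (2 * PI) * (0 + 0)) with (F x) in C by ring.
  apply (Un_cv_ext _ _ _ ) with (2 := C). intros M.
  rewrite SF_kernel, kernel_fold.
  assert (Hc1 : forall y, continuous (fun u => F (x + u)) y).
  { intros. apply (cont_comp (fun u => x + u) F). cont. apply F_cont. }
  assert (Hc2 : forall y, continuous (fun u => F (x - u)) y).
  { intros. apply (cont_comp (fun u => x - u) F). cont. apply F_cont. }
  rewrite (RInt_ext (fun u => (F (x + u) - F x) * Dk M u) (fun u => F (x + u) * Dk M u - F x * Dk M u))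
    by (intros; req; ring).
  rewrite (RInt_ext (fun u => (F (x - u) - F x) * Dk M u) (fun u => F (x - u) * Dk M u - F x * Dk M u))
    by (intros; req; ring).
  rewrite !RInt_minusR, !(RInt_scalR (Dk M)), Dk_int.
  - req. field. lra.
  - apply ex_RInt_cont. apply Dk_cont.
  - apply ex_RInt_cont. intros; apply cont_mult; [apply Hc2|apply Dk_cont].
  - apply ex_RInt_cont. intros; apply cont_mult; [cont|apply Dk_cont].
  - apply ex_RInt_cont. intros; apply cont_mult; [apply Hc1|apply Dk_cont].
  - apply ex_RInt_cont. intros; apply cont_mult; [cont|apply Dk_cont].
Qed.
End Fourier.

Definition cq (q i : nat) : R := 2 * (PI / INR q) * INR i.

Lemma trig_sum_mult (q j : nat) (y : R) : (1 <= q)%nat ->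
  rsum (fun i => cos (y + INR (j * q) * cq q i)) q = INR q * cos y.
Proof.
  intros Hq. assert (0 < INR q) by (apply lt_0_INR; lia).
  rewrite (rsum_ext _ (fun _ => cos y)). apply rsum_const.
  intros i _. unfold cq. rewrite mult_INR.
  replace (y + INR j * INR q * (2 * (PI / INR q) * INR i)) with (y + 2 * INR (j * i) * PI)
    by (rewrite mult_INR; field; lra).
  apply cos_period.
Qed.

Lemma trig_sum_zero (q j l : nat) (y : R) : (0 < l < q)%nat ->
  rsum (fun i => cos (y + INR (j * q + l) * cq q i)) q = 0.
Proof.
  intros Hl. assert (Hq : 0 < INR q) by (apply lt_0_INR; lia).
  set (k := (j * q + l)%nat).
  set (al := 2 * PI * INR k / INR q).
  assert (HP := PI_RGT_0).
  assert (Hs : sin (al / 2) <> 0).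
  { intros H0. apply sin_eq_0_0 in H0. destruct H0 as [m Hm].
    unfold al, k in Hm. rewrite plus_INR, mult_INR in Hm.
    assert (E : INR l / INR q = IZR m - INR j).
    { apply (Rmult_eq_reg_l PI); [|lra].
      replace (PI * (INR l / INR q)) with (2 * PI * (INR j * INR q + INR l) / INR q / 2 - PI * INR j) by (field; lra).
      rewrite Hm. ring. }
    rewrite (INR_IZR_INZ j), <- minus_IZR in E.
    assert (h1 : 0 < INR l / INR q) by (apply Rdiv_lt_0_compat; [apply lt_0_INR; lia|lra]).
    assert (h2 : INR l / INR q < 1).
    { apply (Rmult_lt_reg_r (INR q)); auto. replace (INR l / INR q * INR q) with (INR l) by (field; lra).
      rewrite Rmult_1_l. apply lt_INR. lia. }
    rewrite E in h1, h2. apply lt_IZR in h1. apply lt_IZR in h2. lia. }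
  assert (Hterm : forall i, 2 * sin (al / 2) * cos (y + INR k * cq q i) =
     sin (y + (INR i + / 2) * al) - sin (y + (INR i - / 2) * al)).
  { intros i. rewrite form4.
    replace ((y + (INR i + / 2) * al + (y + (INR i - / 2) * al)) / 2) with (y + INR k * cq q i)
      by (unfold al, cq; field; lra).
    replace ((y + (INR i + / 2) * al - (y + (INR i - / 2) * al)) / 2) with (al / 2) by field. ring. }
  apply (Rmult_eq_reg_l (2 * sin (al / 2))); [|lra].
  rewrite Rmult_0_r, <- rsum_scal.
  set (f := fun i : nat => sin (y + (INR i - / 2) * al)).
  rewrite (rsum_ext _ (fun i => f (S i) - f i)).
  - rewrite rsum_tele. unfold f. simpl INR at 2.
    replace (y + (INR q - / 2) * al) with ((y + (0 - / 2) * al) + 2 * INR k * PI).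
    rewrite sin_period. ring.
    unfold al. field. lra.
  - intros i _. rewrite Hterm. unfold f. rewrite S_INR. replace (INR i + 1 - / 2) with (INR i + / 2) by field. reflexivity.
Qed.

Lemma rsum_split (f : nat -> R) a b : rsum f (a + b) = rsum f a + rsum (fun l => f (a + l)%nat) b.
Proof. induction b; simpl. rewrite Nat.add_0_r. ring. rewrite Nat.add_succ_r. simpl. rewrite IHb. ring. Qed.

Lemma rsum_blocks (A B : nat -> R) (q N : nat) : (1 <= q)%nat ->
  (forall m l, (0 < l < q)%nat -> A (m * q + l)%nat = 0) -> (forall m, A (m * q)%nat = B m) ->
  rsum (fun j => A (S j)) (N * q) = rsum (fun m => B (S m)) N.
Proof.
  intros Hq H0 H1. induction N.
  - simpl. auto.
  - replace (S N * q)%nat with (N * q + q)%nat by lia.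
    rewrite rsum_split, IHN. cbn [rsum]. f_equal.
    destruct q as [|q']; [lia|]. cbn [rsum].
    rewrite (rsum_ext _ (fun _ => 0)).
    + rewrite rsum_const. replace (S (N * S q' + q')) with (S N * S q')%nat by lia.
      rewrite H1. ring.
    + intros l Hl. replace (S (N * S q' + l)) with (N * S q' + S l)%nat by lia. apply H0. lia.
Qed.

Lemma rsum_derive (f : nat -> R -> R) (df : nat -> R -> R) N x :
  (forall i, is_derive (f i) x (df i x)) ->
  is_derive (fun t => rsum (fun i => f i t) N) x (rsum (fun i => df i x) N).
Proof.
  intros H. induction N; cbn [rsum].
  - replace 0 with (@zero R_NormedModule) by reflexivity. apply is_derive_const.
  - apply (is_derive_plus (fun t => rsum (fun i => f i t) N) (f N)); auto.
Qed.

Lemma rsum_cont (f : nat -> R -> R) N x : (forall i, continuous (f i) x) ->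
  continuous (fun t => rsum (fun i => f i t) N) x.
Proof. intros H. induction N; cbn [rsum]. apply cont_const. apply cont_plus; auto. Qed.

Lemma RInt_rsum (f : nat -> R -> R) N a b : (forall i x, continuous (f i) x) ->
  RInt (fun t => rsum (fun i => f i t) N) a b = rsum (fun i => RInt (f i) a b) N.
Proof.
  intros H. induction N; cbn [rsum].
  - rewrite RInt_constR. req. ring.
  - rewrite (RInt_plusR (fun t => rsum (fun i => f i t) N) (f N)).
    rewrite IHN. auto.
    apply ex_RInt_cont. intros; apply rsum_cont; auto.
    apply ex_RInt_cont. auto.
Qed.

Definition gq (n : R -> R) (q : nat) (t : R) : R := / INR q * rsum (fun i => n (t + cq q i)) q.

Section Qpart.
Variables (n n' : R -> R) (L : R) (q : nat).
Hypothesis Hder : forall x, is_derive n x (n' x).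
Hypothesis Hc' : forall x, continuous n' x.
Hypothesis HL : forall x, Rabs (n' x) <= L.
Hypothesis Hper : periodic2pi n.
Hypothesis Hq : (1 <= q)%nat.

Lemma n_cont x : continuous n x.
Proof. apply cont_of_derive. eexists; apply Hder. Qed.

Lemma gq_der x : is_derive (gq n q) x (/ INR q * rsum (fun i => n' (x + cq q i)) q).
Proof.
  unfold gq. apply (is_derive_scal (fun t => rsum (fun i => n (t + cq q i)) q)).
  apply (rsum_derive (fun i t => n (t + cq q i)) (fun i t => n' (t + cq q i))).
  intros i. assert (hd : is_derive (fun t => t + cq q i) x 1) by (auto_derive; auto).
  assert (h := is_derive_comp n (fun t => t + cq q i) x _ 1 (Hder _) hd).
  replace (n' (x + cq q i)) with (scal 1 (n' (x + cq q i))). exact h.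
  unfold scal; simpl; unfold mult; simpl; ring.
Qed.

Lemma gq'_cont x : continuous (fun x => / INR q * rsum (fun i => n' (x + cq q i)) q) x.
Proof.
  apply cont_mult. apply cont_const. apply (rsum_cont (fun i t => n' (t + cq q i))).
  intros i. apply (cont_comp (fun t => t + cq q i) n'). cont. auto.
Qed.

Lemma gq'_bound x : Rabs (/ INR q * rsum (fun i => n' (x + cq q i)) q) <= L.
Proof.
  assert (Hq0 : 0 < INR q) by (apply lt_0_INR; lia).
  rewrite Rabs_mult, Rabs_inv, (Rabs_right (INR q)) by lra.
  apply (Rmult_le_reg_l (INR q)); auto. rewrite <- Rmult_assoc, Rinv_r, Rmult_1_l by lra.
  eapply Rle_trans; [apply rsum_abs|].
  apply Rle_trans with (rsum (fun _ => L) q). apply rsum_le; intros; apply HL.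
  rewrite rsum_const. lra.
Qed.

Lemma gq_per t : gq n q (t + 2 * PI) = gq n q t.
Proof.
  unfold gq. f_equal. apply rsum_ext. intros i _.
  replace (t + 2 * PI + cq q i) with ((t + cq q i) + 2 * PI) by ring. apply Hper.
Qed.

Lemma gq_cont x : continuous (gq n q) x.
Proof. apply cont_of_derive. eexists; apply gq_der. Qed.

Lemma RInt_g_cos (k : nat) th :
  RInt (fun t => gq n q t * cos (INR k * (th - t))) 0 (2 * PI) =
  / INR q * RInt (fun s => n s * rsum (fun i => cos (INR k * (th - s) + INR k * cq q i)) q) 0 (2 * PI).
Proof.
  assert (HP := PI_RGT_0).
  unfold gq.
  rewrite (RInt_ext _ (fun t => / INR q * rsum (fun i => n (t + cq q i) * cos (INR k * (th - t))) q)).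
  2:{ intros. rewrite Rmult_assoc. f_equal. rewrite Rmult_comm, <- rsum_scal. apply rsum_ext. intros. req. ring. }
  rewrite (RInt_scalR (fun t => rsum (fun i => n (t + cq q i) * cos (INR k * (th - t))) q)).
  2:{ apply ex_RInt_cont. intros. apply (rsum_cont (fun i t => n (t + cq q i) * cos (INR k * (th - t)))).
      intros i. apply cont_mult. apply (cont_comp (fun t => t + cq q i) n). cont. apply n_cont. cont. }
  rewrite (RInt_rsum (fun i t => n (t + cq q i) * cos (INR k * (th - t)))).
  2:{ intros i x. apply cont_mult. apply (cont_comp (fun t => t + cq q i) n). cont. apply n_cont. cont. }
  f_equal.
  rewrite (RInt_ext (fun s => n s * rsum (fun i => cos (INR k * (th - s) + INR k * cq q i)) q)
                    (fun s => rsum (fun i => n s * cos (INR k * (th - s) + INR k * cq q i)) q)).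
  2:{ intros. rewrite <- rsum_scal. reflexivity. }
  rewrite (RInt_rsum (fun i s => n s * cos (INR k * (th - s) + INR k * cq q i))).
  2:{ intros i x. apply cont_mult. apply n_cont. cont. }
  apply rsum_ext. intros i _.
  set (P := fun s => n s * cos (INR k * (th - s) + INR k * cq q i)).
  rewrite (RInt_ext _ (fun t => P (t + cq q i))).
  2:{ intros. unfold P. f_equal. f_equal. ring. }
  apply RInt_periodic_shift.
  - intros. unfold P. apply cont_mult. apply n_cont. cont.
  - intros t. unfold P. rewrite Hper. f_equal.
    replace (INR k * (th - (t + 2 * PI)) + INR k * cq q i) with
      ((INR k * (th - t) + INR k * cq q i) + - (2 * INR k * PI)) by ring.
    rewrite <- (cos_period _ k). f_equal. ring.
Qed.

End Qpart.

Lemma Un_cv_sub (u : nat -> R) l q : (1 <= q)%nat -> Un_cv u l -> Un_cv (fun N => u (N * q)%nat) l.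
Proof.
  intros Hq H eps He. destruct (H eps He) as [N HN]. exists N. intros m Hm. apply HN.
  unfold ge in *. apply Nat.le_trans with m; auto. nia.
Qed.

Lemma fq_conv (n n' : R -> R) (L : R) (q : nat) th :
  (forall x, is_derive n x (n' x)) -> (forall x, continuous n' x) -> (forall x, Rabs (n' x) <= L) ->
  periodic2pi n -> (1 <= q)%nat ->
  Un_cv (fourier_q_partial n q th) (/ INR q * rsum (fun i => n (reg q th i)) q).
Proof.
  intros Hder Hc' HL Hper Hq.
  assert (HP := PI_RGT_0). assert (Hq0 : 0 < INR q) by (apply lt_0_INR; lia).
  assert (C := fourier_conv (gq n q) _ L (gq_der n n' q Hder) (gq'_cont n' q Hc') (gq'_bound n' L q HL Hq)
                 (gq_per n q Hper) th).
  apply (Un_cv_sub _ _ q Hq) in C.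
  assert (Hlim : gq n q th = / INR q * rsum (fun i => n (reg q th i)) q) by reflexivity.
  rewrite Hlim in C.
  apply (Un_cv_ext _ _ _) with (2 := C). intros N.
  assert (Hmult : forall j, RInt (fun t => gq n q t * cos (INR (j * q) * (th - t))) 0 (2 * PI) =
                            RInt (fun t => n t * cos (INR (j * q) * (th - t))) 0 (2 * PI)).
  { intros j. rewrite (RInt_g_cos n n' q Hder Hper). 
    rewrite (RInt_ext _ (fun s => INR q * (n s * cos (INR (j * q) * (th - s))))).
    - rewrite RInt_scalR. req. field. lra. apply ex_RInt_cont. intros; apply cont_mult. apply (n_cont n n' Hder). cont.
    - intros. rewrite trig_sum_mult by auto. req. ring. }
  assert (Hzero : forall j l, (0 < l < q)%nat ->
            RInt (fun t => gq n q t * cos (INR (j * q + l) * (th - t))) 0 (2 * PI) = 0).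
  { intros j l Hl. rewrite (RInt_g_cos n n' q Hder Hper).
    rewrite (RInt_ext _ (fun _ => 0)).
    - rewrite RInt_constR. req. ring.
    - intros. rewrite trig_sum_zero by auto. req. ring. }
  unfold fourier_q_partial, SF. f_equal.
  - f_equal. rewrite RInt_defs by (lra || (intros; apply (n_cont n n' Hder))).
    assert (h := Hmult 0%nat). simpl (INR (0 * q)) in h.
    rewrite (RInt_ext (fun t => gq n q t * cos (0 * (th - t))) (gq n q)) in h.
    rewrite (RInt_ext (fun t => n t * cos (0 * (th - t))) n) in h. auto.
    intros. rewrite Rmult_0_l, cos_0. req. ring.
    intros. rewrite Rmult_0_l, cos_0. req. ring.
  -
    apply (rsum_blocks (fun k => / PI * RInt (fun t => gq n q t * cos (INR k * (th - t))) 0 (2 * PI))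
                       (fun m => fourier_pair n (m * q) th) q N Hq).
    + intros m l Hl. rewrite Hzero by auto. ring.
    + intros m. unfold fourier_pair. rewrite RInt_defs.
      rewrite Hmult. reflexivity. lra. intros; apply cont_mult. apply (n_cont n n' Hder). cont.
Qed.

Theorem mainTheorem3
  (n m : R -> R) (rho : R -> R -> R) (q : nat)
  (Hq : (2 <= q)%nat)
  (Hn : real_analytic n) (Hnp : periodic2pi n)
  (Hm : real_analytic m) (Hmp : periodic2pi m)
  (Hpos : forall e t, 0 < e -> 0 < rho e t)
  (Hper : forall e, 0 < e -> periodic2pi (rho e))
  (Hexp : exists C d, 0 < d /\ forall e t, 0 < e < d ->
            Rabs (rho e t - (1 + e * n t + e ^ 2 * m t)) <= C * e ^ 3)
  (Hconv : exists e0, 0 < e0 /\ forall e, 0 < e < e0 -> strictly_convex (rho e)) :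
  (forall theta, Pq unit_disk_rho q theta = 2 * INR q * sin (PI / INR q)) /\
  exists C d, 0 < d /\
    forall theta, exists v,
      Un_cv (fourier_q_partial n q theta) v /\
      forall e, 0 < e < d ->
        Rabs (Pq (rho e) q theta
              - (Pq unit_disk_rho q theta + 2 * e * INR q * sin (PI / INR q) * v))
          <= C * e ^ 2.
Proof.
  split.
  - intros theta. apply unit_disk_Pq; auto.
  - destruct (analytic_facts n Hn Hnp) as [N0 [L [HL0 [HN [HLip [Hder [Hc' HL]]]]]]].
    destruct (analytic_facts m Hm Hmp) as [M0 [_ [_ [HM _]]]].
    destruct (geom_main n m rho q N0 L M0 Hq Hnp HN HL0 HLip HM Hper Hexp) as [C [d [Hd HC]]].
    exists C, d. split; auto. intros theta.
    exists (/ INR q * rsum (fun i => n (reg q theta i)) q). split.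
    + apply (fq_conv n (Derive n) L q theta); auto. lia.
    + intros e He. rewrite unit_disk_Pq by auto. apply HC; auto.
Qed.
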